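(* In the standing setup, the functions $\tau:L\mapsto\tau_L$ and $\gamma:L\mapsto\gamma_L$ on $\mathcal{V}$ satisfy, at every $L\in\mathcal{V}$, $|D|\tau(L)\le2\gamma_L\tau_L$ and $|D|\gamma(L)\le\gamma_L^2(1+3\tau_L)$.
   Context: Standing setup: $\mathcal{X}$ is a real or complex Banach space; $L_0\in\mathcal{B}(\mathcal{X})$ has a simple isolated eigenvalue $\lambda_0$ (there are $u\ne0$ with $L_0u=\lambda_0u$ and a closed $L_0$-invariant complement $G$ of $\langle u\rangle$ with $(L_0-\lambda_0)|_G$ boundedly invertible). $\mathcal{V}$ is an open neighborhood of $L_0$ on which there are analytic maps $\lambda,u,\phi$ with $\lambda_{L_0}=\lambda_0$, $\lambda_L$ a simple isolated eigenvalue of $L$ with eigenvector $u_L$ and eigenform $\phi_L$ ($\phi_L\circ L=\lambda_L\phi_L$), $\phi_L(u_L)=1$. $P_L=\phi_L(\cdot)u_L$, $\pi_L=\mathrm{Id}-P_L$, $S_L=(L-\lambda_L)|_{\ker\phi_L}^{-1}\pi_L$, $\tau_L=\|P_L\|=\|\phi_L\|\|u_L\|$, $\gamma_L=\|S_L\|$. The metric derivative of a real function $f$ on an open subset of a Banach space is $|D|f(x)=\limsup_{r\to0}\sup_{y\in B(x,r)}|f(x)-f(y)|/\|x-y\|$. *)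

(* Defs.v *)
From Stdlib Require Import Reals ClassicalEpsilon.
Open Scope R_scope.

Inductive Kind := KR | KC.

Record Cx := mkC { Cre : R; Cim : R }.
Definition Cadd (z w : Cx) := mkC (Cre z + Cre w) (Cim z + Cim w).
Definition Cmul (z w : Cx) :=
  mkC (Cre z * Cre w - Cim z * Cim w) (Cre z * Cim w + Cim z * Cre w).
Definition Copp (z : Cx) := mkC (- Cre z) (- Cim z).
Definition Cabs (z : Cx) := sqrt (Cre z * Cre z + Cim z * Cim z).

Definition sc (k : Kind) : Type := match k with KR => R | KC => Cx end.
Definition kzero {k} : sc k := match k return sc k with KR => 0 | KC => mkC 0 0 end.
Definition kone {k} : sc k := match k return sc k with KR => 1 | KC => mkC 1 0 end.
Definition kadd {k} : sc k -> sc k -> sc k :=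
  match k return sc k -> sc k -> sc k with KR => Rplus | KC => Cadd end.
Definition kmul {k} : sc k -> sc k -> sc k :=
  match k return sc k -> sc k -> sc k with KR => Rmult | KC => Cmul end.
Definition kopp {k} : sc k -> sc k :=
  match k return sc k -> sc k with KR => Ropp | KC => Copp end.
Definition kabs {k} : sc k -> R :=
  match k return sc k -> R with KR => Rabs | KC => Cabs end.

Record Banach (k : Kind) := {
  bcar :> Type;
  bzero : bcar;
  badd : bcar -> bcar -> bcar;
  bopp : bcar -> bcar;
  bscal : sc k -> bcar -> bcar;
  bnorm : bcar -> R;
  ax_addA : forall x y z, badd x (badd y z) = badd (badd x y) z;
  ax_addC : forall x y, badd x y = badd y x;
  ax_add0 : forall x, badd x bzero = x;
  ax_addN : forall x, badd x (bopp x) = bzero;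
  ax_scalDr : forall a x y, bscal a (badd x y) = badd (bscal a x) (bscal a y);
  ax_scalDl : forall a b x, bscal (kadd a b) x = badd (bscal a x) (bscal b x);
  ax_scalA : forall a b x, bscal a (bscal b x) = bscal (kmul a b) x;
  ax_scal1 : forall x, bscal kone x = x;
  ax_norm_eq0 : forall x, bnorm x = 0 -> x = bzero;
  ax_norm_scal : forall a x, bnorm (bscal a x) = kabs a * bnorm x;
  ax_norm_tri : forall x y, bnorm (badd x y) <= bnorm x + bnorm y;
  ax_complete : forall s : nat -> bcar,
    (forall eps, 0 < eps -> exists N, forall m n, (m >= N)%nat -> (n >= N)%nat ->
        bnorm (badd (s m) (bopp (s n))) < eps) ->
    exists l, forall eps, 0 < eps -> exists N, forall n, (n >= N)%nat ->
        bnorm (badd (s n) (bopp l)) < eps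
}.
Arguments bzero {k} _.
Arguments badd {k} {_} _ _.
Arguments bopp {k} {_} _.
Arguments bscal {k} {_} _ _.
Arguments bnorm {k} {_} _.

Section Ops.
Context {k : Kind} {X : Banach k}.

Definition bsub (x y : X) : X := badd x (bopp y).

Definition BLop (T : X -> X) : Prop :=
  (forall x y, T (badd x y) = badd (T x) (T y)) /\
  (forall a x, T (bscal a x) = bscal a (T x)) /\
  (exists M, forall x, bnorm (T x) <= M * bnorm x).

Definition BLfun (f : X -> sc k) : Prop :=
  (forall x y, f (badd x y) = kadd (f x) (f y)) /\
  (forall a x, f (bscal a x) = kmul a (f x)) /\
  (exists M, forall x, kabs (f x) <= M * bnorm x).

Definition opnorm (T : X -> X) : R :=
  epsilon (inhabits 0)
    (is_lub (fun r => exists x : X, bnorm x <= 1 /\ r = bnorm (T x))).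
Definition funnorm (f : X -> sc k) : R :=
  epsilon (inhabits 0)
    (is_lub (fun r => exists x : X, bnorm x <= 1 /\ r = kabs (f x))).

Definition op_add (T U : X -> X) : X -> X := fun x => badd (T x) (U x).
Definition op_sub (T U : X -> X) : X -> X := fun x => bsub (T x) (U x).
Definition op_scal (a : sc k) (T : X -> X) : X -> X := fun x => bscal a (T x).

Definition is_open_op (V : (X -> X) -> Prop) : Prop :=
  forall L, V L -> BLop L /\
    exists r, 0 < r /\ forall L', BLop L' -> opnorm (op_sub L' L) < r -> V L'.

Definition closed_subspace (G : X -> Prop) : Prop :=
  G (bzero X) /\ (forall x y, G x -> G y -> G (badd x y)) /\
  (forall a x, G x -> G (bscal a x)) /\
  (forall (s : nat -> X) l, (forall n, G (s n)) ->
     (forall eps, 0 < eps -> exists N, forall n, (n >= N)%nat -> bnorm (bsub (s n) l) < eps) ->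
     G l).

Definition simple_isolated_eigenvalue (L : X -> X) (lam : sc k) : Prop :=
  exists u : X, u <> bzero X /\ L u = bscal lam u /\
  exists G : X -> Prop,
    closed_subspace G /\
    (forall g, G g -> G (L g)) /\
    (* G is a complement of <u> *)
    (forall x, exists a g, G g /\ x = badd (bscal a u) g) /\
    (forall a, G (bscal a u) -> a = kzero) /\
    (* (L - lam)|_G is boundedly invertible on G *)
    exists Rinv : X -> X,
      (forall h, G h -> G (Rinv h) /\ bsub (L (Rinv h)) (bscal lam (Rinv h)) = h) /\
      (forall g, G g -> Rinv (bsub (L g) (bscal lam g)) = g) /\
      (exists M, forall h, G h -> bnorm (Rinv h) <= M * bnorm h).

(** Codomains for analytic maps: K, X, X^* *)
Record RawSpace := {
  rcar : Type;
  radd : rcar -> rcar -> rcar;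
  rsub : rcar -> rcar -> rcar;
  rscal : sc k -> rcar -> rcar;
  rnorm : rcar -> R;
  rmem : rcar -> Prop     (* membership in the (sub)space *)
}.

Definition raw_K : RawSpace :=
  {| rcar := sc k; radd := kadd; rsub := fun a b => kadd a (kopp b);
     rscal := kmul; rnorm := kabs; rmem := fun _ => True |}.
Definition raw_X : RawSpace :=
  {| rcar := bcar k X; radd := badd; rsub := bsub; rscal := bscal;
     rnorm := bnorm; rmem := fun _ => True |}.
Definition raw_dual : RawSpace :=
  {| rcar := X -> sc k;
     radd := fun f g x => kadd (f x) (g x);
     rsub := fun f g x => kadd (f x) (kopp (g x));
     rscal := fun a f x => kmul a (f x);
     rnorm := funnorm; rmem := BLfun |}.

Fixpoint prodR (f : nat -> R) (n : nat) : R :=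
  match n with O => 1 | S m => prodR f m * f m end.

Definition upd (v : nat -> (X -> X)) (i : nat) (H : X -> X) : nat -> (X -> X) :=
  fun j => if Nat.eqb j i then H else v j.

Definition bounded_multilinear (Y : RawSpace) (n : nat)
    (A : (nat -> (X -> X)) -> rcar Y) (M : R) : Prop :=
  0 <= M /\
  (forall v w, (forall i, (i < n)%nat -> v i = w i) -> A v = A w) /\
  (forall v, (forall i, (i < n)%nat -> BLop (v i)) ->
     rmem Y (A v) /\ rnorm Y (A v) <= M * prodR (fun i => opnorm (v i)) n) /\
  (forall v i a H1 H2, (i < n)%nat -> (forall j, (j < n)%nat -> BLop (v j)) ->
     BLop H1 -> BLop H2 ->
     A (upd v i (op_add H1 (op_scal a H2))) =
       radd Y (A (upd v i H1)) (rscal Y a (A (upd v i H2)))).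

Fixpoint rsum (Y : RawSpace) (g : nat -> rcar Y) (N : nat) : rcar Y :=
  match N with O => g O | S m => radd Y (rsum Y g m) (g (S m)) end.

Definition analytic_at (Y : RawSpace) (V : (X -> X) -> Prop)
    (f : (X -> X) -> rcar Y) (L0 : X -> X) : Prop :=
  exists r, 0 < r /\
  exists (A : nat -> (nat -> (X -> X)) -> rcar Y) (M : nat -> R),
    (forall n, bounded_multilinear Y n (A n) (M n)) /\
    (exists l, Un_cv (fun N => sum_f_R0 (fun n => M n * r ^ n) N) l) /\
    (forall H, BLop H -> opnorm H < r ->
       V (op_add L0 H) /\
       Un_cv (fun N => rnorm Y (rsub Y (f (op_add L0 H))
                                  (rsum Y (fun n => A n (fun _ => H)) N))) 0).

Definition analytic_on (Y : RawSpace) (V : (X -> X) -> Prop)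
    (f : (X -> X) -> rcar Y) : Prop :=
  forall L, V L -> analytic_at Y V f L.

Definition tau_of (u : (X -> X) -> X) (phi : (X -> X) -> X -> sc k) (L : X -> X) : R :=
  funnorm (phi L) * bnorm (u L).

Definition P_of (u : (X -> X) -> X) (phi : (X -> X) -> X -> sc k) (L : X -> X) : X -> X :=
  fun x => bscal (phi L x) (u L).
Definition pi_of (u : (X -> X) -> X) (phi : (X -> X) -> X -> sc k) (L : X -> X) : X -> X :=
  fun x => bsub x (P_of u phi L x).

Definition S_of (lam : (X -> X) -> sc k) (u : (X -> X) -> X)
    (phi : (X -> X) -> X -> sc k) (L : X -> X) : X -> X :=
  fun x => epsilon (inhabits (bzero X))
    (fun y => phi L y = kzero /\ bsub (L y) (bscal (lam L) y) = pi_of u phi L x).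

Definition gamma_of lam u phi (L : X -> X) : R := opnorm (S_of lam u phi L).

(** |D| f (L) <= c, for f defined on the open set V of B(X):
    limsup_{r->0} sup_{L' in B(L,r), L' <> L} |f L - f L'| / ||L - L'|| <= c *)
Definition metric_deriv_le (V : (X -> X) -> Prop) (f : (X -> X) -> R)
    (L : X -> X) (c : R) : Prop :=
  forall eps, 0 < eps -> exists r, 0 < r /\
    forall L', V L' -> L' <> L -> opnorm (op_sub L' L) < r ->
      Rabs (f L - f L') / opnorm (op_sub L L') <= c + eps.

End Ops.

(* Main.v *)
Require Import Defs.
From Stdlib Require Import Reals ClassicalEpsilon Ring Lra Psatz FunctionalExtensionality.
Open Scope R_scope.

Ltac cx := repeat match goal with z : Cx |- _ => destruct z end; unfold Cadd, Cmul, Copp; simpl; f_equal; ring.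
Lemma kring (k : Kind) : ring_theory (@kzero k) kone kadd kmul (fun a b => kadd a (kopp b)) kopp eq.
Proof. destruct k; constructor; simpl; intros; try ring; cx. Qed.

Definition kofR {k} (r : R) : sc k := match k return sc k with KR => r | KC => mkC r 0 end.

Lemma Cabs_ge0 z : 0 <= Cabs z.
Proof. unfold Cabs; apply sqrt_pos. Qed.

Lemma kabs_ge0 {k} (a : sc k) : 0 <= kabs a.
Proof. destruct k; simpl. apply Rabs_pos. apply Cabs_ge0. Qed.

Lemma kabs_mul {k} (a b : sc k) : kabs (kmul a b) = kabs a * kabs b.
Proof. destruct k; simpl. apply Rabs_mult.
  destruct a as [a1 a2], b as [b1 b2]; unfold Cabs, Cmul; simpl.
  rewrite <- sqrt_mult by nra. f_equal; ring. Qed.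

Lemma kabs_tri {k} (a b : sc k) : kabs (kadd a b) <= kabs a + kabs b.
Proof. destruct k; simpl. apply Rabs_triang.
  destruct a as [a1 a2], b as [b1 b2]; unfold Cabs, Cadd; simpl.
  set (p := sqrt (a1*a1+a2*a2)); set (q := sqrt (b1*b1+b2*b2)).
  assert (hp : 0 <= p) by apply sqrt_pos. assert (hq : 0 <= q) by apply sqrt_pos.
  assert (p*p = a1*a1+a2*a2) by (apply sqrt_sqrt; nra).
  assert (q*q = b1*b1+b2*b2) by (apply sqrt_sqrt; nra).
  assert (a1*b1+a2*b2 <= p*q).
  { destruct (Rle_dec (a1*b1+a2*b2) 0). nra.
    apply Rsqr_incr_0_var. unfold Rsqr.
    replace (p*q*(p*q)) with ((p*p)*(q*q)) by ring. rewrite H, H0. clear n. pose proof (Rle_0_sqr (a1*b2 - a2*b1)); unfold Rsqr in *; nra. apply Rmult_le_pos; lra. }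
  rewrite <- (sqrt_square (p+q)) by lra. apply sqrt_le_1_alt. nra. Qed.

Lemma kabs_opp {k} (a : sc k) : kabs (kopp a) = kabs a.
Proof. destruct k; simpl. apply Rabs_Ropp. destruct a; unfold Cabs, Copp; simpl; f_equal; ring. Qed.

Lemma kabs_zero {k} : kabs (@kzero k) = 0.
Proof. destruct k; simpl. apply Rabs_R0. unfold Cabs; simpl. replace (0*0+0*0) with 0 by ring. apply sqrt_0. Qed.

Lemma kabs_one {k} : kabs (@kone k) = 1.
Proof. destruct k; simpl. apply Rabs_R1. unfold Cabs; simpl. replace (1*1+0*0) with 1 by ring. apply sqrt_1. Qed.

Lemma kabs_eq0 {k} (a : sc k) : kabs a = 0 -> a = kzero.
Proof. destruct k; simpl. intro H; destruct (Req_dec a 0); auto; exfalso; apply (Rabs_no_R0 a); auto.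
  destruct a as [a1 a2]; unfold Cabs; simpl; intro H.
  apply sqrt_eq_0 in H; [|nra]. f_equal; nra. Qed.

Lemma kabs_kofR {k} r : kabs (@kofR k r) = Rabs r.
Proof. destruct k; simpl; auto. unfold Cabs; simpl. replace (r*r+0*0) with (Rsqr r) by (unfold Rsqr; ring).
  apply sqrt_Rsqr_abs. Qed.

Lemma kone_neq {k} : (@kone k) <> kzero.
Proof. intro H. assert (kabs (@kone k) = kabs (@kzero k)) by (rewrite H; auto).
  rewrite kabs_one, kabs_zero in H0. lra. Qed.

Section Scal.
Context {k : Kind}.
Add Ring kr : (kring k).
Lemma kabs_sub (a b : sc k) : kabs a - kabs b <= kabs (kadd a (kopp b)).
Proof. assert (a = kadd (kadd a (kopp b)) b) by ring.
  pose proof (kabs_tri (kadd a (kopp b)) b). rewrite <- H in H0. lra. Qed.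
Lemma kabs_subC (a b : sc k) : kabs (kadd a (kopp b)) = kabs (kadd b (kopp a)).
Proof. replace (kadd a (kopp b)) with (kopp (kadd b (kopp a))) by ring. apply kabs_opp. Qed.
Lemma kmul_kofR (a b : R) : kmul (@kofR k a) (kofR b) = kofR (a*b).
Proof. destruct k; simpl; auto. unfold Cmul; simpl; f_equal; ring. Qed.
Lemma kofR1 : @kofR k 1 = kone.
Proof. destruct k; auto. Qed.
Lemma kmul_eq0 (a b : sc k) : kmul a b = kzero -> a = kzero \/ b = kzero.
Proof. intro H. assert (kabs a * kabs b = 0) by (rewrite <- kabs_mul, H; apply kabs_zero).
  destruct (Rmult_integral _ _ H0); [left|right]; apply kabs_eq0; auto. Qed.
End Scal.
Lemma Rmult_le_0_r (a b : R) : a <= 0 -> 0 <= b -> a * b <= 0.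
Proof. intros; nra. Qed.
Arguments ax_addA {k b0} x y z. Arguments ax_addC {k b0} x y. Arguments ax_add0 {k b0} x.
Arguments ax_addN {k b0} x. Arguments ax_scalDr {k b0} a x y. Arguments ax_scalDl {k b0} a b x.
Arguments ax_scalA {k b0} a b x. Arguments ax_scal1 {k b0} x. Arguments ax_norm_eq0 {k b0} x.
Arguments ax_norm_scal {k b0} a x. Arguments ax_norm_tri {k b0} x y.
Section Ban.
Context {k : Kind} {X : Banach k}.
Add Ring kr2 : (kring k).
Implicit Types x y z w : X.
Notation "0v" := (bzero X).

Lemma add0l x : badd 0v x = x.
Proof. rewrite ax_addC; apply ax_add0. Qed.
Lemma addNl x : badd (bopp x) x = 0v.
Proof. rewrite ax_addC; apply ax_addN. Qed.
Lemma add_cancel (a x y : X) : badd a x = badd a y -> x = y.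
Proof. intro H. rewrite <- (add0l x), <- (add0l y), <- (addNl a), <- !ax_addA, H; auto. Qed.
Lemma opp_unique x y : badd x y = 0v -> y = bopp x.
Proof. intro H. apply (add_cancel x). rewrite H, ax_addN; auto. Qed.
Lemma opp_opp x : bopp (bopp x) = x.
Proof. symmetry; apply opp_unique, addNl. Qed.
Lemma opp0 : bopp 0v = 0v.
Proof. symmetry; apply opp_unique, ax_add0. Qed.
Lemma opp_add x y : bopp (badd x y) = badd (bopp x) (bopp y).
Proof. symmetry; apply opp_unique.
  rewrite (ax_addC (bopp x)), ax_addA, <- (ax_addA x), ax_addN, ax_add0, ax_addN; auto. Qed.
Lemma scal0l x : bscal kzero x = 0v.
Proof. apply (add_cancel (bscal kzero x)). rewrite <- ax_scalDl, ax_add0.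
  f_equal; ring. Qed.
Lemma scal0r a : bscal a 0v = 0v.
Proof. apply (add_cancel (bscal a 0v)). rewrite <- ax_scalDr, !ax_add0; auto. Qed.
Lemma scalN a x : bscal (kopp a) x = bopp (bscal a x).
Proof. apply opp_unique. rewrite <- ax_scalDl. replace (kadd a (kopp a)) with (@kzero k) by ring. apply scal0l. Qed.
Lemma scal_oppr a x : bscal a (bopp x) = bopp (bscal a x).
Proof. apply opp_unique. rewrite <- ax_scalDr, ax_addN. apply scal0r. Qed.
Lemma oppE x : bopp x = bscal (kopp kone) x.
Proof. rewrite scalN, ax_scal1; auto. Qed.
Lemma norm0 : bnorm 0v = 0.
Proof. rewrite <- (scal0l 0v), ax_norm_scal, kabs_zero; ring. Qed.
Lemma norm_opp x : bnorm (bopp x) = bnorm x.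
Proof. rewrite oppE, ax_norm_scal, kabs_opp, kabs_one; ring. Qed.
Lemma norm_ge0 x : 0 <= bnorm x.
Proof. pose proof (ax_norm_tri x (bopp x)). rewrite ax_addN, norm0, norm_opp in H. lra. Qed.
Lemma norm_eq0 x : bnorm x = 0 -> x = 0v.
Proof. apply ax_norm_eq0. Qed.

Lemma sub_diag x : bsub x x = 0v.
Proof. apply ax_addN. Qed.
Lemma sub0r x : bsub x 0v = x.
Proof. unfold bsub; rewrite opp0; apply ax_add0. Qed.
Lemma sub_opp x y : bopp (bsub x y) = bsub y x.
Proof. unfold bsub; rewrite opp_add, opp_opp, ax_addC; auto. Qed.
Lemma norm_subC x y : bnorm (bsub x y) = bnorm (bsub y x).
Proof. rewrite <- sub_opp, norm_opp; auto. Qed.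
Lemma sub_eq0 x y : bsub x y = 0v -> x = y.
Proof. intro H. apply opp_unique in H. rewrite <- (opp_opp x), <- H, opp_opp; auto. Qed.
Lemma norm_sub_tri x y z : bnorm (bsub x z) <= bnorm (bsub x y) + bnorm (bsub y z).
Proof. replace (bsub x z) with (badd (bsub x y) (bsub y z)). apply ax_norm_tri.
  unfold bsub. rewrite <- ax_addA, (ax_addA (bopp y)), addNl, add0l; auto. Qed.
Lemma norm_sub_ge x y : bnorm x - bnorm y <= bnorm (bsub x y).
Proof. pose proof (norm_sub_tri x y 0v). rewrite !sub0r in H. lra. Qed.
Lemma norm_add_sub x y : bnorm (bsub (badd x y) x) = bnorm y.
Proof. unfold bsub. rewrite (ax_addC x), <- ax_addA, ax_addN, ax_add0; auto. Qed.
Lemma add_sub x y : bsub (badd x y) x = y.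
Proof. unfold bsub. rewrite (ax_addC x), <- ax_addA, ax_addN, ax_add0; auto. Qed.
Lemma scal_sub_l a b x : bscal (kadd a (kopp b)) x = bsub (bscal a x) (bscal b x).
Proof. rewrite ax_scalDl, scalN; auto. Qed.
Lemma scal_sub_r a x y : bscal a (bsub x y) = bsub (bscal a x) (bscal a y).
Proof. unfold bsub; rewrite ax_scalDr, scal_oppr; auto. Qed.
Lemma sub_add_add (a b c d : X) : bsub (badd a b) (badd c d) = badd (bsub a c) (bsub b d).
Proof. unfold bsub. rewrite opp_add, <- !ax_addA. f_equal. rewrite !ax_addA. f_equal. apply ax_addC. Qed.
Lemma add_perm (p q r s : X) : badd (badd p q) (badd r s) = badd (badd p s) (badd r q).
Proof. rewrite <- !ax_addA. f_equal. rewrite (ax_addC r s), (ax_addC r q), !ax_addA. f_equal. apply ax_addC. Qed.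
Lemma sub_sub_l (a b c : X) : bsub (bsub a b) (bsub a c) = bsub c b.
Proof. unfold bsub. rewrite opp_add, opp_opp, (ax_addC (bopp a) c), add_perm, ax_addN, add0l; auto. Qed.
Lemma sub_sub_r (a b c : X) : bsub (bsub a c) (bsub b c) = bsub a b.
Proof. unfold bsub. rewrite opp_add, opp_opp, (ax_addC (bopp b) c), add_perm, ax_addN, ax_add0; auto. Qed.
Lemma norm_scal_sub_le x y : bnorm (bsub x y) <= bnorm x + bnorm y.
Proof. unfold bsub. rewrite <- (norm_opp y). apply ax_norm_tri. Qed.
Lemma add_sub_sub (p q r : X) : badd (bsub p q) (bsub q r) = bsub p r.
Proof. unfold bsub. rewrite <- ax_addA, (ax_addA (bopp q)), addNl, add0l; auto. Qed.
Lemma addsub_swap (a c y : X) : bsub (badd a c) y = badd (bsub a y) c.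
Proof. unfold bsub. rewrite <- !ax_addA. f_equal. apply ax_addC. Qed.
Lemma subsub_swap (a b y : X) : bsub (bsub a b) y = bsub (bsub a y) b.
Proof. unfold bsub at 1 2 3 4. apply addsub_swap. Qed.
Lemma sub_self_l (y w : X) : bsub (bsub y w) y = bopp w.
Proof. rewrite subsub_swap, sub_diag. unfold bsub; apply add0l. Qed.
Lemma four_tri (z c y w1 w2 w3 : X) : bsub z c = badd (bsub (bsub y w1) w2) w3 ->
  bnorm (bsub z y) <= bnorm c + bnorm w1 + bnorm w2 + bnorm w3.
Proof. intro Heq. assert (Hz : z = badd (badd (bsub (bsub y w1) w2) w3) c).
  { rewrite <- Heq. unfold bsub. rewrite <- ax_addA, addNl, ax_add0; auto. }
  subst z. rewrite addsub_swap. eapply Rle_trans. apply ax_norm_tri.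
  rewrite addsub_swap. pose proof (ax_norm_tri (bsub (bsub (bsub y w1) w2) y) w3) as Q1.
  rewrite subsub_swap, sub_self_l in Q1 |- *.
  pose proof (norm_scal_sub_le (bopp w1) w2) as Q2. rewrite norm_opp in Q2. lra. Qed.
Lemma add_sub_r (a b : X) : badd a (bsub b a) = b.
Proof. unfold bsub. rewrite ax_addC, <- ax_addA, addNl, ax_add0; auto. Qed.
End Ban.
Section Lub.
Context {k : Kind} {X : Banach k}.
Add Ring kr3 : (kring k).

Definition lubn (g : X -> R) : R :=
  epsilon (inhabits 0) (is_lub (fun r => exists x : X, bnorm x <= 1 /\ r = g x)).

Lemma lubn_spec (g : X -> R) C :
  (forall x, 0 <= g x) -> (forall a x, g (bscal a x) = kabs a * g x) ->
  (forall x, g x <= C * bnorm x) ->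
  (forall x, g x <= lubn g * bnorm x) /\ 0 <= lubn g /\
  (forall C', 0 <= C' -> (forall x, g x <= C' * bnorm x) -> lubn g <= C').
Proof.
  intros Hg0 Hh HC.
  set (E := fun r => exists x : X, bnorm x <= 1 /\ r = g x).
  assert (Hg00 : g (bzero X) = 0).
  { rewrite <- (scal0l (bzero X)), Hh, kabs_zero. ring. }
  assert (HE : is_lub E (lubn g)).
  { unfold lubn. apply epsilon_spec.
    destruct (completeness E) as [m Hm].
    - exists (Rabs C). intros r [x [Hx ->]]. pose proof (HC x). pose proof (norm_ge0 x).
      pose proof (Rle_abs C). pose proof (Rabs_pos C). nra.
    - exists 0, (bzero X). rewrite norm0, Hg00. split; [lra|auto].
    - exists m; auto. }
  destruct HE as [Hub Hl].
  split; [|split].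
  - intro x. destruct (Req_dec (bnorm x) 0) as [H0|H0].
    + apply norm_eq0 in H0; subst. rewrite Hg00, norm0. lra.
    + pose proof (norm_ge0 x).
      set (y := bscal (@kofR k (/ bnorm x)) x).
      assert (Hy : bnorm y = 1).
      { unfold y. rewrite ax_norm_scal, kabs_kofR, Rabs_right. field; auto.
        apply Rle_ge, Rlt_le, Rinv_0_lt_compat; lra. }
      assert (g y <= lubn g). { apply Hub. exists y; split; auto; lra. }
      unfold y in H1; rewrite Hh, kabs_kofR, Rabs_right in H1.
      2: apply Rle_ge, Rlt_le, Rinv_0_lt_compat; lra.
      apply (Rmult_le_compat_l (bnorm x)) in H1; auto.
      rewrite <- Rmult_assoc, Rinv_r, Rmult_1_l in H1 by auto. lra.
  - apply Rle_trans with (g (bzero X)). rewrite Hg00; lra.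
    apply Hub. exists (bzero X). rewrite norm0; split; auto; lra.
  - intros C' HC' Hb. apply Hl. intros r [x [Hx ->]].
    pose proof (Hb x). pose proof (norm_ge0 x). nra.
Qed.

Definition bnd_lin (T : X -> X) : Prop :=
  (forall a x, T (bscal a x) = bscal a (T x)) /\ exists C, forall x, bnorm (T x) <= C * bnorm x.
Definition bnd_fun (f : X -> sc k) : Prop :=
  (forall a x, f (bscal a x) = kmul a (f x)) /\ exists C, forall x, kabs (f x) <= C * bnorm x.

Lemma BLop_bnd T : BLop T -> bnd_lin T.
Proof. intros [_ [H1 H2]]; split; auto. Qed.
Lemma BLfun_bnd f : BLfun f -> bnd_fun f.
Proof. intros [_ [H1 H2]]; split; auto. Qed.

Lemma op_spec T : bnd_lin T ->
  (forall x, bnorm (T x) <= opnorm T * bnorm x) /\ 0 <= opnorm T /\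
  (forall C', 0 <= C' -> (forall x, bnorm (T x) <= C' * bnorm x) -> opnorm T <= C').
Proof. intros [Hh [C HC]]. change (opnorm T) with (lubn (fun x => bnorm (T x))).
  apply (lubn_spec _ C); auto. intro; apply norm_ge0.
  intros a x; simpl; rewrite Hh; apply ax_norm_scal. Qed.

Lemma fn_spec f : bnd_fun f ->
  (forall x, kabs (f x) <= funnorm f * bnorm x) /\ 0 <= funnorm f /\
  (forall C', 0 <= C' -> (forall x, kabs (f x) <= C' * bnorm x) -> funnorm f <= C').
Proof. intros [Hh [C HC]]. change (funnorm f) with (lubn (fun x => kabs (f x))).
  apply (lubn_spec _ C); auto. intro; apply kabs_ge0.
  intros a x; simpl; rewrite Hh; apply kabs_mul. Qed.

Lemma op_le T x : bnd_lin T -> bnorm (T x) <= opnorm T * bnorm x.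
Proof. intro H; apply (op_spec T H). Qed.
Lemma op_ge0 T : bnd_lin T -> 0 <= opnorm T.
Proof. intro H; apply (op_spec T H). Qed.
Lemma op_lub T C : bnd_lin T -> 0 <= C -> (forall x, bnorm (T x) <= C * bnorm x) -> opnorm T <= C.
Proof. intro H; apply (op_spec T H). Qed.
Lemma fn_le f x : bnd_fun f -> kabs (f x) <= funnorm f * bnorm x.
Proof. intro H; apply (fn_spec f H). Qed.
Lemma fn_ge0 f : bnd_fun f -> 0 <= funnorm f.
Proof. intro H; apply (fn_spec f H). Qed.
Lemma fn_lub f C : bnd_fun f -> 0 <= C -> (forall x, kabs (f x) <= C * bnorm x) -> funnorm f <= C.
Proof. intro H; apply (fn_spec f H). Qed.

Lemma op_diff T U B : bnd_lin T -> bnd_lin U -> 0 <= B ->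
  (forall x, bnorm (bsub (T x) (U x)) <= B * bnorm x) -> opnorm T <= opnorm U + B.
Proof. intros HT HU hB Hb. apply op_lub; auto. pose proof (op_ge0 U HU); lra.
  intro x. pose proof (norm_sub_ge (T x) (U x)). pose proof (Hb x). pose proof (op_le U x HU). lra. Qed.

Lemma fn_diff (f g : X -> sc k) (v w : X) B : bnd_fun f -> bnd_fun g -> 0 < bnorm v -> 0 <= B ->
  (forall x, bnorm (bsub (bscal (f x) v) (bscal (g x) w)) <= B * bnorm x) ->
  funnorm f * bnorm v <= funnorm g * bnorm w + B.
Proof. intros Hf Hg hv hB Hb.
  assert (h1 : 0 <= funnorm g * bnorm w + B) by (pose proof (fn_ge0 g Hg); pose proof (norm_ge0 w); nra).
  assert (funnorm f <= (funnorm g * bnorm w + B) / bnorm v).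
  { apply fn_lub; auto. unfold Rdiv; apply Rmult_le_pos; auto; left; apply Rinv_0_lt_compat; auto.
    intro x. pose proof (norm_sub_ge (bscal (f x) v) (bscal (g x) w)) as Q. rewrite !ax_norm_scal in Q.
    pose proof (Hb x). pose proof (fn_le g x Hg). pose proof (norm_ge0 w). pose proof (norm_ge0 x).
    assert (kabs (f x) * bnorm v <= (funnorm g * bnorm w + B) * bnorm x) by nra.
    unfold Rdiv. replace ((funnorm g * bnorm w + B) * / bnorm v * bnorm x) with (((funnorm g * bnorm w + B) * bnorm x) / bnorm v) by (field; lra).
    apply (Rmult_le_reg_r (bnorm v)); auto. unfold Rdiv. rewrite Rmult_assoc, Rinv_l by lra. lra. }
  apply (Rmult_le_compat_r (bnorm v)) in H; [|lra]. unfold Rdiv in H. rewrite Rmult_assoc, Rinv_l, Rmult_1_r in H by lra. auto. Qed.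
End Lub.
Section Eig.
Context {k : Kind} {X : Banach k}.
Set Default Proof Using "All".
Add Ring kr4 : (kring k).
Variables (lam : (X -> X) -> sc k) (u : (X -> X) -> X) (phi : (X -> X) -> X -> sc k).
Variable L : X -> X.
Definition EigData (lam : (X -> X) -> sc k) (u : (X -> X) -> X) (phi : (X -> X) -> X -> sc k) (L : X -> X) : Prop :=
  BLop L /\ simple_isolated_eigenvalue L (lam L) /\ L (u L) = bscal (lam L) (u L) /\
  BLfun (phi L) /\ (forall x, phi L (L x) = kmul (lam L) (phi L x)) /\ phi L (u L) = kone.
Variable Hed : EigData lam u phi L.
Let HL : BLop L := proj1 Hed.
Let Hsie : simple_isolated_eigenvalue L (lam L) := proj1 (proj2 Hed).
Let Hu : L (u L) = bscal (lam L) (u L) := proj1 (proj2 (proj2 Hed)).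
Let Hphi : BLfun (phi L) := proj1 (proj2 (proj2 (proj2 Hed))).
Let Hphil : forall x, phi L (L x) = kmul (lam L) (phi L x) := proj1 (proj2 (proj2 (proj2 (proj2 Hed)))).
Let Hone : phi L (u L) = kone := proj2 (proj2 (proj2 (proj2 (proj2 Hed)))).
Notation "0v" := (bzero X).
Definition Nop (x : X) : X := bsub (L x) (bscal (lam L) x).

Lemma L_add x y : L (badd x y) = badd (L x) (L y).
Proof. apply HL. Qed.
Lemma L_scal a x : L (bscal a x) = bscal a (L x).
Proof. apply HL. Qed.
Lemma L_0 : L 0v = 0v.
Proof. rewrite <- (scal0l 0v) at 1. rewrite L_scal, scal0l; auto. Qed.
Lemma L_opp x : L (bopp x) = bopp (L x).
Proof. rewrite !oppE, L_scal; auto. Qed.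
Lemma L_sub x y : L (bsub x y) = bsub (L x) (L y).
Proof. unfold bsub; rewrite L_add, L_opp; auto. Qed.

Lemma phi_add x y : phi L (badd x y) = kadd (phi L x) (phi L y).
Proof. apply Hphi. Qed.
Lemma phi_scal a x : phi L (bscal a x) = kmul a (phi L x).
Proof. apply Hphi. Qed.
Lemma phi_0 : phi L 0v = kzero.
Proof. rewrite <- (scal0l 0v) at 1. rewrite phi_scal; ring. Qed.
Lemma phi_opp x : phi L (bopp x) = kopp (phi L x).
Proof. rewrite oppE, phi_scal; ring. Qed.
Lemma phi_sub x y : phi L (bsub x y) = kadd (phi L x) (kopp (phi L y)).
Proof. unfold bsub; rewrite phi_add, phi_opp; auto. Qed.

Lemma N_add x y : Nop (badd x y) = badd (Nop x) (Nop y).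
Proof. unfold Nop. rewrite L_add, ax_scalDr, sub_add_add; auto. Qed.
Lemma N_scal a x : Nop (bscal a x) = bscal a (Nop x).
Proof. unfold Nop. rewrite L_scal, scal_sub_r, !ax_scalA. f_equal. f_equal. ring. Qed.
Lemma N_0 : Nop 0v = 0v.
Proof. rewrite <- (scal0l 0v) at 1. rewrite N_scal, scal0l; auto. Qed.
Lemma N_opp x : Nop (bopp x) = bopp (Nop x).
Proof. rewrite !oppE, N_scal; auto. Qed.
Lemma N_sub x y : Nop (bsub x y) = bsub (Nop x) (Nop y).
Proof. unfold bsub; rewrite N_add, N_opp; auto. Qed.
Lemma phi_N x : phi L (Nop x) = kzero.
Proof. unfold Nop. rewrite phi_sub, Hphil, phi_scal. ring. Qed.
Lemma N_u : Nop (u L) = 0v.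
Proof. unfold Nop. rewrite Hu. apply sub_diag. Qed.

Lemma pi_eq x : pi_of u phi L x = bsub x (bscal (phi L x) (u L)).
Proof. reflexivity. Qed.
Lemma phi_pi x : phi L (pi_of u phi L x) = kzero.
Proof. rewrite pi_eq, phi_sub, phi_scal, Hone. ring. Qed.
Lemma pi_add x y : pi_of u phi L (badd x y) = badd (pi_of u phi L x) (pi_of u phi L y).
Proof. rewrite !pi_eq, phi_add, ax_scalDl, sub_add_add; auto. Qed.
Lemma pi_scal a x : pi_of u phi L (bscal a x) = bscal a (pi_of u phi L x).
Proof. rewrite !pi_eq, phi_scal, scal_sub_r, ax_scalA; auto. Qed.
Lemma pi_N x : pi_of u phi L (Nop x) = Nop x.
Proof. rewrite pi_eq, phi_N, scal0l, sub0r; auto. Qed.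
Lemma pi_u : pi_of u phi L (u L) = 0v.
Proof. rewrite pi_eq, Hone, ax_scal1; apply sub_diag. Qed.

Lemma sie_facts : exists Rinv : X -> X, exists M,
  (forall y, phi L y = kzero -> phi L (Rinv y) = kzero /\ Nop (Rinv y) = y /\ bnorm (Rinv y) <= M * bnorm y) /\
  (forall y, phi L y = kzero -> Nop y = 0v -> y = 0v).
Proof.
  destruct Hsie as [u0 [_ [Hu0 [G [[G0 [GD [GS _]]] [GL [Gdec [Gind [Rinv [HR1 [HR2 [M HM]]]]]]]]]]]].
  assert (R0 : Rinv 0v = 0v).
  { pose proof (HR2 0v G0). unfold bsub in H. rewrite L_0, scal0r, ax_addN in H. auto. }
  assert (Gker : forall g, G g -> phi L g = kzero).
  { intros g Hg. destruct (HR1 g Hg) as [_ He]. rewrite <- He. apply (phi_N (Rinv g)). }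
  assert (Nu0 : Nop u0 = 0v). { unfold Nop; rewrite Hu0; apply sub_diag. }
  assert (GN0 : forall g, G g -> Nop g = 0v -> g = 0v).
  { intros g Hg Hn. rewrite <- (HR2 g Hg). change (bsub (L g) (bscal (lam L) g)) with (Nop g). rewrite Hn; auto. }
  assert (phu0 : phi L u0 <> kzero).
  { destruct (Gdec (u L)) as [a [g [Hg Hdec]]].
    assert (g = 0v).
    { apply GN0; auto. assert (Nop (u L) = badd (Nop (bscal a u0)) (Nop g)) by (rewrite Hdec; apply N_add).
      rewrite N_u, N_scal, Nu0, scal0r, add0l in H. auto. }
    subst g. rewrite ax_add0 in Hdec. intro Hc. apply (@kone_neq k).
    rewrite <- Hone, Hdec, phi_scal, Hc. ring. }
  assert (kerG : forall y, phi L y = kzero -> G y).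
  { intros y Hy. destruct (Gdec y) as [a [g [Hg Hdec]]].
    assert (a = kzero).
    { rewrite Hdec, phi_add, phi_scal, (Gker g Hg) in Hy.
      destruct (kmul_eq0 a (phi L u0)); auto. rewrite <- Hy; ring. contradiction. }
    subst a. rewrite Hdec, scal0l, add0l; auto. }
  exists Rinv, M. split.
  - intros y Hy. destruct (HR1 y (kerG y Hy)) as [HG He]. split; [|split].
    + apply Gker; auto.
    + exact He.
    + apply HM, kerG; auto.
  - intros y Hy Hn. apply GN0; auto.
Qed.

Lemma sol_unique y1 y2 : phi L y1 = phi L y2 -> Nop y1 = Nop y2 -> y1 = y2.
Proof. intros H1 H2. destruct sie_facts as [Ri [M [_ Hu']]].
  apply sub_eq0, Hu'. rewrite phi_sub, H1; ring. rewrite N_sub, H2; apply sub_diag. Qed.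

Definition Sop := S_of lam u phi L.

Lemma S_spec x : phi L (Sop x) = kzero /\ Nop (Sop x) = pi_of u phi L x.
Proof. unfold Sop, S_of. apply epsilon_spec.
  destruct sie_facts as [Ri [M [H1 _]]]. exists (Ri (pi_of u phi L x)).
  destruct (H1 _ (phi_pi x)) as [A [B _]]. auto. Qed.

Lemma S_char x y : phi L y = kzero -> Nop y = pi_of u phi L x -> Sop x = y.
Proof. intros. destruct (S_spec x). apply sol_unique; congruence. Qed.

Lemma S_add x y : Sop (badd x y) = badd (Sop x) (Sop y).
Proof. destruct (S_spec x), (S_spec y). apply S_char.
  rewrite phi_add, H, H1; ring. rewrite N_add, H0, H2, pi_add; auto. Qed.
Lemma S_scal a x : Sop (bscal a x) = bscal a (Sop x).
Proof. destruct (S_spec x). apply S_char.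
  rewrite phi_scal, H; ring. rewrite N_scal, H0, pi_scal; auto. Qed.
Lemma S_0 : Sop 0v = 0v.
Proof. rewrite <- (scal0l 0v) at 1. rewrite S_scal, scal0l; auto. Qed.
Lemma S_opp x : Sop (bopp x) = bopp (Sop x).
Proof. rewrite !oppE, S_scal; auto. Qed.
Lemma S_sub x y : Sop (bsub x y) = bsub (Sop x) (Sop y).
Proof. unfold bsub; rewrite S_add, S_opp; auto. Qed.
Lemma S_N x : Sop (Nop x) = pi_of u phi L x.
Proof. apply S_char. apply phi_pi. rewrite pi_eq, N_sub, N_scal, N_u, scal0r, sub0r, pi_N; auto. Qed.
Lemma S_u : Sop (u L) = 0v.
Proof. apply S_char. apply phi_0. rewrite N_0, pi_u; auto. Qed.
Lemma phi_S x : phi L (Sop x) = kzero.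
Proof. apply S_spec. Qed.
Lemma N_S x : Nop (Sop x) = pi_of u phi L x.
Proof. apply S_spec. Qed.
Lemma S_bnd : bnd_lin Sop.
Proof. split. apply S_scal.
  destruct sie_facts as [Ri [M [H1 _]]].
  exists (Rabs M * (1 + funnorm (phi L) * bnorm (u L))). intro x.
  destruct (H1 _ (phi_pi x)) as [A [B C]].
  rewrite (S_char x (Ri (pi_of u phi L x)) A B).
  assert (bnorm (pi_of u phi L x) <= (1 + funnorm (phi L) * bnorm (u L)) * bnorm x).
  { rewrite pi_eq. eapply Rle_trans. apply norm_scal_sub_le. rewrite ax_norm_scal.
    pose proof (fn_le (phi L) x (BLfun_bnd _ Hphi)). pose proof (norm_ge0 (u L)). nra. }
  pose proof (Rle_abs M). pose proof (norm_ge0 (pi_of u phi L x)). pose proof (Rabs_pos M).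
  nra. Qed.
End Eig.
Section Ana.
Context {k : Kind} {X : Banach k}.
Add Ring kr5 : (kring k).
Notation "0v" := (bzero X).

Definition zop : X -> X := fun _ => bzero X.
Lemma zop_BL : BLop zop.
Proof. unfold zop; split; [|split]. intros; rewrite ax_add0; auto. intros; rewrite scal0r; auto.
  exists 0; intro; rewrite norm0; lra. Qed.
Lemma opnorm_zop : opnorm zop = 0.
Proof. apply Rle_antisym. apply op_lub. apply BLop_bnd, zop_BL. lra.
  intro; unfold zop; rewrite norm0; lra.
  apply op_ge0, BLop_bnd, zop_BL. Qed.
Lemma op_add_zop L : op_add L zop = L.
Proof. apply functional_extensionality; intro x; unfold op_add, zop; apply ax_add0. Qed.

Lemma prodR_const (h : R) n : prodR (fun _ => h) n = h ^ n.
Proof. induction n; simpl; auto. rewrite IHn; ring. Qed.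

Lemma le_lim_0 (x : R) (w : nat -> R) : (forall N, x <= w N) -> Un_cv w 0 -> x <= 0.
Proof. intros H Hc. destruct (Rle_dec x 0); auto. exfalso.
  destruct (Hc (x/2)) as [N HN]. lra. specialize (HN N (le_n _)). specialize (H N).
  unfold Rdist in HN. rewrite Rminus_0_r in HN. pose proof (Rle_abs (w N)). lra. Qed.

Variable Y : @RawSpace k.
Notation d a b := (rnorm Y (rsub Y a b)).
Hypothesis HT : forall a b c, rmem Y a -> rmem Y b -> rmem Y c -> d a b <= d a c + d c b.
Hypothesis HS : forall a b, rmem Y a -> rmem Y b -> d a b = d b a.
Hypothesis HD : forall s t, rmem Y s -> rmem Y t -> d (radd Y s t) s <= rnorm Y t.
Hypothesis HZ : forall a, rmem Y a -> d a a = 0.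
Hypothesis HA : forall s t, rmem Y s -> rmem Y t -> rmem Y (radd Y s t).

Lemma analytic_lip (V : (X -> X) -> Prop) (f : (X -> X) -> rcar Y) L0 :
  analytic_at Y V f L0 -> (forall L, V L -> rmem Y (f L)) ->
  exists r C, 0 < r /\ 0 <= C /\ forall H, BLop H -> opnorm H < r ->
    d (f (op_add L0 H)) (f L0) <= C * opnorm H.
Proof.
  intros [r [hr [A [M [HM [[l Hl] Hcv]]]]]] Hmem.
  assert (HM0 : forall n, 0 <= M n) by (intro n; apply (HM n)).
  assert (Hgr : Un_growing (fun N => sum_f_R0 (fun n => M n * r ^ n) N)).
  { intro n. simpl. pose proof (HM0 (S n)). pose proof (pow_le r (S n) (Rlt_le _ _ hr)). simpl in H0. nra. }
  assert (Hsl : forall N, sum_f_R0 (fun n => M n * r ^ n) N <= l) by (apply growing_ineq; auto).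
  assert (l0 : 0 <= l).
  { eapply Rle_trans; [|apply (Hsl O)]. simpl. pose proof (HM0 O). nra. }
  assert (Hpart : forall H, BLop H -> opnorm H < r ->
     (forall N, rmem Y (rsum Y (fun n => A n (fun _ => H)) N)) /\
     forall N, d (rsum Y (fun n => A n (fun _ => H)) N) (A 0%nat (fun _ => H))
        <= opnorm H / r * sum_f_R0 (fun n => M n * r ^ n) N).
  { intros H BH hH. pose proof (op_ge0 H (BLop_bnd H BH)) as h0.
    assert (Ha : forall n, rmem Y (A n (fun _ => H)) /\ rnorm Y (A n (fun _ => H)) <= M n * opnorm H ^ n).
    { intro n. destruct (HM n) as [_ [_ [Hb _]]]. destruct (Hb (fun _ => H)) as [B1 B2]. intros; auto.
      rewrite prodR_const in B2. auto. }
    assert (Hm : forall N, rmem Y (rsum Y (fun n => A n (fun _ => H)) N)).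
    { induction N; simpl. apply Ha. apply HA; auto. apply Ha. }
    split; auto. induction N; simpl.
    - rewrite HZ by apply Ha. pose proof (HM0 O). apply Rmult_le_pos; [|lra].
      unfold Rdiv; apply Rmult_le_pos; auto. left; apply Rinv_0_lt_compat; auto.
    - eapply Rle_trans. apply (HT _ _ (rsum Y (fun n => A n (fun _ => H)) N)); auto. apply HA; auto. apply Ha. apply Ha.
      eapply Rle_trans. apply Rplus_le_compat_r. apply HD; auto. apply Ha.
      destruct (Ha (S N)) as [_ B].
      assert (M (S N) * opnorm H ^ S N <= opnorm H / r * (M (S N) * r ^ S N)).
      { simpl. unfold Rdiv. assert (opnorm H ^ N <= r ^ N) by (apply pow_incr; lra).
        replace (opnorm H * / r * (M (S N) * (r * r ^ N))) with (M (S N) * (opnorm H * r ^ N)) by (field; lra).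
        apply Rmult_le_compat_l. auto. apply Rmult_le_compat_l; auto. }
      rewrite Rmult_plus_distr_l. simpl in *. lra. }
  assert (Hz0 : opnorm zop < r) by (rewrite opnorm_zop; auto).
  assert (Hf0 : d (f L0) (A 0%nat (fun _ => zop)) <= 0).
  { destruct (Hpart zop zop_BL Hz0) as [Hm Hb].
    destruct (Hcv zop zop_BL Hz0) as [HV Hc].
    rewrite op_add_zop in Hc, HV.
    assert (Hma : rmem Y (A 0%nat (fun _ => zop))).
    { destruct (HM 0%nat) as [_ [_ [Hb0 _]]]. apply (Hb0 (fun _ => zop)). intros; apply zop_BL. }
    assert (Hmf : rmem Y (f L0)) by (apply Hmem; auto).
    apply (le_lim_0 _ (fun N => d (f L0) (rsum Y (fun n => A n (fun _ => zop)) N))); [|exact Hc].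
    intro N. pose proof (HT _ _ (rsum Y (fun n => A n (fun _ => zop)) N) Hmf Hma (Hm N)).
    pose proof (Hb N). rewrite opnorm_zop in H0. unfold Rdiv in H0. rewrite Rmult_0_l, Rmult_0_l in H0.
    lra. }
  exists r, (l / r). split; auto. split. unfold Rdiv; apply Rmult_le_pos; auto. left; apply Rinv_0_lt_compat; auto.
  intros H BH hH.
  destruct (Hpart H BH hH) as [Hm Hb]. destruct (Hcv H BH hH) as [HV Hc].
  assert (Ha0 : A 0%nat (fun _ => H) = A 0%nat (fun _ => zop)).
  { destruct (HM 0%nat) as [_ [Hc0 _]]. apply Hc0. intros i hi; inversion hi. }
  assert (Hma0 : rmem Y (A 0%nat (fun _ => zop))).
  { destruct (HM 0%nat) as [_ [_ [Hb0 _]]]. apply (Hb0 (fun _ => zop)). intros; apply zop_BL. }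
  assert (Hmf : rmem Y (f L0)).
  { apply Hmem. destruct (Hcv zop zop_BL Hz0) as [HV' _]. rewrite op_add_zop in HV'. auto. }
  pose proof (op_ge0 H (BLop_bnd H BH)) as h0.
  assert (forall N, d (f (op_add L0 H)) (f L0) - l / r * opnorm H <= d (f (op_add L0 H)) (rsum Y (fun n => A n (fun _ => H)) N)).
  { intro N. pose proof (HT (f (op_add L0 H)) (f L0) (rsum Y (fun n => A n (fun _ => H)) N) (Hmem _ HV) Hmf (Hm N)).
    pose proof (HT (rsum Y (fun n => A n (fun _ => H)) N) (f L0) (A 0%nat (fun _ => zop)) (Hm N) Hmf Hma0).
    rewrite (HS (A 0%nat (fun _ => zop)) (f L0)) in H1 by auto.
    pose proof (Hb N). rewrite Ha0 in H2.
    assert (opnorm H / r * sum_f_R0 (fun n => M n * r ^ n) N <= l / r * opnorm H).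
    { replace (l / r * opnorm H) with (opnorm H / r * l) by (field; lra).
      apply Rmult_le_compat_l; auto. unfold Rdiv; apply Rmult_le_pos; auto. left; apply Rinv_0_lt_compat; auto. }
    lra. }
  assert (d (f (op_add L0 H)) (f L0) - l / r * opnorm H <= 0).
  { apply (le_lim_0 _ _ H0). intros e he. destruct (Hc e he) as [N0 HN0]. exists N0. intros n hn. apply HN0; auto. }
  lra.
Qed.
End Ana.
Section Inst.
Context {k : Kind} {X : Banach k}.
Add Ring kr6 : (kring k).

Definition fsub (f g : X -> sc k) : X -> sc k := fun x => kadd (f x) (kopp (g x)).

Lemma BLfun_add (f g : X -> sc k) : BLfun f -> BLfun g -> BLfun (fun x => kadd (f x) (g x)).
Proof. intros [fa [fs [Cf HCf]]] [ga [gs [Cg HCg]]]. split; [|split].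
  - intros; rewrite fa, ga; ring.
  - intros; rewrite fs, gs; ring.
  - exists (Cf + Cg). intro x. eapply Rle_trans. apply kabs_tri. specialize (HCf x); specialize (HCg x). lra. Qed.
Lemma BLfun_sub (f g : X -> sc k) : BLfun f -> BLfun g -> BLfun (fsub f g).
Proof. intros [fa [fs [Cf HCf]]] [ga [gs [Cg HCg]]]. unfold fsub. split; [|split].
  - intros; rewrite fa, ga; ring.
  - intros; rewrite fs, gs; ring.
  - exists (Cf + Cg). intro x. eapply Rle_trans. apply kabs_tri. rewrite kabs_opp. specialize (HCf x); specialize (HCg x). lra. Qed.

Lemma fsub_tri (a b c : X -> sc k) : BLfun a -> BLfun b -> BLfun c ->
  funnorm (fsub a b) <= funnorm (fsub a c) + funnorm (fsub c b).
Proof. intros Ha Hb Hc.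
  pose proof (BLfun_bnd _ (BLfun_sub _ _ Ha Hc)) as B1. pose proof (BLfun_bnd _ (BLfun_sub _ _ Hc Hb)) as B2.
  apply fn_lub. apply BLfun_bnd, BLfun_sub; auto.
  pose proof (fn_ge0 _ B1). pose proof (fn_ge0 _ B2). lra.
  intro x. unfold fsub at 1. replace (kadd (a x) (kopp (b x))) with (kadd (fsub a c x) (fsub c b x)) by (unfold fsub; ring).
  eapply Rle_trans. apply kabs_tri. pose proof (fn_le _ x B1). pose proof (fn_le _ x B2). lra. Qed.
Lemma fsub_sym (a b : X -> sc k) : BLfun a -> BLfun b -> funnorm (fsub a b) = funnorm (fsub b a).
Proof. intros Ha Hb. pose proof (BLfun_bnd _ (BLfun_sub _ _ Ha Hb)) as B1. pose proof (BLfun_bnd _ (BLfun_sub _ _ Hb Ha)) as B2.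
  apply Rle_antisym; apply fn_lub; auto; try apply fn_ge0; auto; intro x; unfold fsub at 1; rewrite kabs_subC.
  exact (fn_le _ x B2). exact (fn_le _ x B1). Qed.
Lemma fsub_add (s t : X -> sc k) : BLfun s -> BLfun t ->
  funnorm (fsub (fun x => kadd (s x) (t x)) s) <= funnorm t.
Proof. intros Hs Ht. pose proof (BLfun_bnd _ Ht) as B.
  apply fn_lub. apply BLfun_bnd, BLfun_sub; auto. apply BLfun_add; auto. apply fn_ge0; auto.
  intro x. unfold fsub. replace (kadd (kadd (s x) (t x)) (kopp (s x))) with (t x) by ring. apply fn_le; auto. Qed.
Lemma fsub_diag (a : X -> sc k) : BLfun a -> funnorm (fsub a a) = 0.
Proof. intro Ha. pose proof (BLfun_bnd _ (BLfun_sub _ _ Ha Ha)) as B. apply Rle_antisym.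
  apply fn_lub; auto. lra. intro x. unfold fsub. replace (kadd (a x) (kopp (a x))) with (@kzero k) by ring.
  rewrite kabs_zero. pose proof (norm_ge0 x). lra. apply fn_ge0; auto. Qed.

Lemma analytic_lip_X (V : (X -> X) -> Prop) (f : (X -> X) -> X) L0 :
  analytic_at raw_X V f L0 ->
  exists r C, 0 < r /\ 0 <= C /\ forall H, BLop H -> opnorm H < r ->
    bnorm (bsub (f (op_add L0 H)) (f L0)) <= C * opnorm H.
Proof. intro Ha. refine (analytic_lip raw_X _ _ _ _ _ V f L0 Ha _); simpl; auto.
  intros; apply norm_sub_tri. intros; apply norm_subC. intros; rewrite norm_add_sub; lra.
  intros; rewrite sub_diag; apply norm0. Qed.

Lemma analytic_lip_dual (V : (X -> X) -> Prop) (f : (X -> X) -> X -> sc k) L0 :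
  analytic_at raw_dual V f L0 -> (forall L, V L -> BLfun (f L)) ->
  exists r C, 0 < r /\ 0 <= C /\ forall H, BLop H -> opnorm H < r ->
    funnorm (fsub (f (op_add L0 H)) (f L0)) <= C * opnorm H.
Proof. intros Ha Hm. refine (analytic_lip raw_dual _ _ _ _ _ V f L0 Ha _); simpl; auto.
  intros; apply fsub_tri; auto. intros; apply fsub_sym; auto. intros; apply fsub_add; auto.
  intros; apply fsub_diag; auto. intros; apply BLfun_add; auto. Qed.
Lemma BLop_sub (T U : X -> X) : BLop T -> BLop U -> BLop (op_sub T U).
Proof. intros [Ta [Ts [CT HT]]] [Ua [Us [CU HU]]]. unfold op_sub. split; [|split].
  - intros. rewrite Ta, Ua, sub_add_add; auto.
  - intros. rewrite Ts, Us, scal_sub_r; auto.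
  - exists (CT + CU). intro x. eapply Rle_trans. apply norm_scal_sub_le. specialize (HT x); specialize (HU x). lra. Qed.

End Inst.
Section Two.
Context {k : Kind} {X : Banach k}.
Add Ring kr7 : (kring k).
Set Default Proof Using "All".
Variables (lam : (X -> X) -> sc k) (u : (X -> X) -> X) (phi : (X -> X) -> X -> sc k).
Variables (L L' : X -> X).
Hypothesis E : EigData lam u phi L.
Hypothesis E' : EigData lam u phi L'.
Notation "0v" := (bzero X).
Notation S := (Sop lam u phi L).
Notation S' := (Sop lam u phi L').
Notation Hp := (op_sub L' L).
Notation h := (opnorm (op_sub L' L)).
Notation Dl := (kadd (lam L') (kopp (lam L))).
Notation u0 := (u L).
Notation u1 := (u L').
Notation ph := (phi L).
Notation ph' := (phi L').
Notation g := (opnorm (Sop lam u phi L)).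
Notation g' := (opnorm (Sop lam u phi L')).
Notation dph := (funnorm (fsub (phi L) (phi L'))).

Lemma keq (a b : sc k) : kadd a (kopp b) = kzero -> a = b.
Proof. intro Hq. transitivity (kadd (kadd a (kopp b)) b). ring. rewrite Hq; ring. Qed.

Lemma BL_L : BLop L. Proof. apply E. Qed.
Lemma BL_L' : BLop L'. Proof. apply E'. Qed.
Lemma BL_H : BLop Hp. Proof. apply BLop_sub; [apply E'|apply E]. Qed.
Lemma Hx x : Hp x = bsub (L' x) (L x). Proof. reflexivity. Qed.
Lemma hH x : bnorm (Hp x) <= h * bnorm x. Proof. apply op_le, BLop_bnd, BL_H. Qed.
Lemma h0 : 0 <= h. Proof. apply op_ge0, BLop_bnd, BL_H. Qed.
Lemma g0 : 0 <= g. Proof. apply op_ge0, (S_bnd _ _ _ _ E). Qed.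
Lemma g0' : 0 <= g'. Proof. apply op_ge0, (S_bnd _ _ _ _ E'). Qed.
Lemma gS x : bnorm (S x) <= g * bnorm x. Proof. apply op_le, (S_bnd _ _ _ _ E). Qed.
Lemma gS' x : bnorm (S' x) <= g' * bnorm x. Proof. apply op_le, (S_bnd _ _ _ _ E'). Qed.
Lemma fph x : kabs (ph x) <= funnorm ph * bnorm x. Proof. apply fn_le, BLfun_bnd, E. Qed.
Lemma fph' x : kabs (ph' x) <= funnorm ph' * bnorm x. Proof. apply fn_le, BLfun_bnd, E'. Qed.
Lemma fph0 : 0 <= funnorm ph. Proof. apply fn_ge0, BLfun_bnd, E. Qed.
Lemma fph0' : 0 <= funnorm ph'. Proof. apply fn_ge0, BLfun_bnd, E'. Qed.
Lemma fdph x : kabs (kadd (ph x) (kopp (ph' x))) <= dph * bnorm x.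
Proof. apply (fn_le (fsub ph ph') x). apply BLfun_bnd, BLfun_sub; [apply E|apply E']. Qed.
Lemma dph0 : 0 <= dph. Proof. apply fn_ge0, BLfun_bnd, BLfun_sub; [apply E|apply E']. Qed.

Lemma Lu0 : L u0 = bscal (lam L) u0. Proof. apply E. Qed.
Lemma Lu1 : L' u1 = bscal (lam L') u1. Proof. apply E'. Qed.
Lemma phl x : ph (L x) = kmul (lam L) (ph x). Proof. apply E. Qed.
Lemma phl' x : ph' (L' x) = kmul (lam L') (ph' x). Proof. apply E'. Qed.

Lemma I1 : Nop lam L u1 = bsub (bscal Dl u1) (Hp u1).
Proof. rewrite Hx, Lu1, scal_sub_l, sub_sub_l. reflexivity. Qed.

Lemma I2 : kmul Dl (ph u1) = ph (Hp u1).
Proof. apply keq. pose proof (phi_N _ _ _ _ E u1) as Q. rewrite I1, (phi_sub _ _ _ _ E), (phi_scal _ _ _ _ E) in Q. auto. Qed.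

Lemma Dl_bound : kabs Dl * (1 - funnorm ph * bnorm (bsub u1 u0)) <= funnorm ph * h * bnorm u1.
Proof.
  assert (A : kabs Dl * kabs (ph u1) <= funnorm ph * h * bnorm u1).
  { rewrite <- kabs_mul, I2. eapply Rle_trans. apply fph. pose proof (hH u1). pose proof fph0. nra. }
  assert (B : 1 - funnorm ph * bnorm (bsub u1 u0) <= kabs (ph u1)).
  { pose proof (kabs_sub (@kone k) (ph u1)) as Q. rewrite kabs_one in Q.
    assert (Q1 : kadd kone (kopp (ph u1)) = kopp (ph (bsub u1 u0))).
    { rewrite (phi_sub _ _ _ _ E). replace (ph u0) with (@kone k) by (symmetry; apply E). ring. }
    rewrite Q1, kabs_opp in Q. pose proof (fph (bsub u1 u0)). lra. }
  pose proof (kabs_ge0 Dl). nra.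
Qed.
Lemma I3 x : bsub (bscal (ph' x) u1) (bscal (ph x) u0) =
  bsub (bscal (ph' x) (pi_of u phi L u1)) (bscal (ph (pi_of u phi L' x)) u0).
Proof. rewrite (pi_eq _ _ _ _ E), (pi_eq _ _ _ _ E'). rewrite (phi_sub _ _ _ _ E), (phi_scal _ _ _ _ E).
  rewrite scal_sub_r, ax_scalA, scal_sub_l, sub_sub_r. reflexivity. Qed.

Lemma I4 : pi_of u phi L u1 = bsub (bscal Dl (S (bsub u1 u0))) (S (Hp u1)).
Proof. rewrite <- (S_N _ _ _ _ E), I1, (S_sub _ _ _ _ E), (S_scal _ _ _ _ E), (S_sub _ _ _ _ E u1 u0), (S_u _ _ _ _ E), sub0r.
  reflexivity. Qed.

Lemma I5 x : ph (pi_of u phi L' x) = kadd (ph (Hp (S' x))) (kopp (kmul Dl (ph (S' x)))).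
Proof. rewrite <- (N_S _ _ _ _ E' x). unfold Nop. rewrite Hx, !(phi_sub _ _ _ _ E), (phi_scal _ _ _ _ E), phl. ring. Qed.

Lemma phS' x : kabs (ph (S' x)) <= dph * g' * bnorm x.
Proof. replace (ph (S' x)) with (kadd (ph (S' x)) (kopp (ph' (S' x)))).
  eapply Rle_trans. apply fdph. pose proof dph0. pose proof (gS' x). rewrite Rmult_assoc. apply Rmult_le_compat_l; auto.
  rewrite (phi_S _ _ _ _ E'). ring. Qed.

Lemma norm_sub_scal2 (a b : sc k) (v w : X) : bnorm (bsub (bscal a v) (bscal b w)) <= kabs a * bnorm v + kabs b * bnorm w.
Proof. eapply Rle_trans. apply norm_scal_sub_le. rewrite !ax_norm_scal. lra. Qed.

Definition Etau := funnorm ph' * (kabs Dl * g * bnorm (bsub u1 u0) + g * h * bnorm u1) +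
   bnorm u0 * (funnorm ph * h * g' + kabs Dl * dph * g').

Lemma tau_pt x : bnorm (bsub (bscal (ph' x) u1) (bscal (ph x) u0)) <= Etau * bnorm x.
Proof. rewrite I3. eapply Rle_trans. apply norm_sub_scal2.
  assert (A : bnorm (pi_of u phi L u1) <= kabs Dl * g * bnorm (bsub u1 u0) + g * h * bnorm u1).
  { rewrite I4. eapply Rle_trans. apply norm_scal_sub_le. rewrite ax_norm_scal.
    pose proof (gS (bsub u1 u0)). pose proof (gS (Hp u1)). pose proof (hH u1). pose proof g0. pose proof (kabs_ge0 Dl).
    nra. }
  assert (B : kabs (ph (pi_of u phi L' x)) <= (funnorm ph * h * g' + kabs Dl * dph * g') * bnorm x).
  { rewrite I5. eapply Rle_trans. apply kabs_tri. rewrite kabs_opp, kabs_mul.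
    pose proof (fph (Hp (S' x))) as Q1. pose proof (hH (S' x)) as Q2. pose proof (gS' x) as Q3. pose proof (phS' x) as Q4.
    pose proof fph0 as Q5. pose proof h0 as Q6. pose proof (kabs_ge0 Dl) as Q7. pose proof (norm_ge0 x) as Q8.
    assert (funnorm ph * bnorm (Hp (S' x)) <= funnorm ph * h * g' * bnorm x).
    { eapply Rle_trans. apply Rmult_le_compat_l. auto. apply Q2. rewrite !Rmult_assoc. apply Rmult_le_compat_l; auto.
      apply Rmult_le_compat_l; auto. }
    assert (kabs Dl * kabs (ph (S' x)) <= kabs Dl * dph * g' * bnorm x).
    { rewrite !Rmult_assoc. apply Rmult_le_compat_l; auto. rewrite <- !Rmult_assoc. auto. }
    nra. }
  unfold Etau. pose proof (fph' x). pose proof (norm_ge0 (pi_of u phi L u1)). pose proof (norm_ge0 u0).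
  pose proof (kabs_ge0 (ph' x)). pose proof (kabs_ge0 (ph (pi_of u phi L' x))). pose proof fph0'.
  nra. Qed.
Lemma VN (y : X) : Nop lam L y = badd (bsub (Nop lam L' y) (Hp y)) (bscal Dl y).
Proof. unfold Nop. rewrite Hx, sub_sub_l, scal_sub_l, add_sub_sub. reflexivity. Qed.

Lemma gam_master_id x : bsub (S' x) (bscal (ph x) (S' u0)) =
  badd (bsub (bsub (S x) (bscal (ph' (S x)) u1)) (S' (Hp (S x)))) (bscal Dl (S' (S x))).
Proof.
  transitivity (S' (pi_of u phi L x)).
  { rewrite (pi_eq _ _ _ _ E), (S_sub _ _ _ _ E'), (S_scal _ _ _ _ E'). reflexivity. }
  rewrite <- (N_S _ _ _ _ E x), VN, (S_add _ _ _ _ E'), (S_sub _ _ _ _ E'), (S_scal _ _ _ _ E'), (S_N _ _ _ _ E').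
  rewrite (pi_eq _ _ _ _ E'). reflexivity. Qed.

Lemma gam_master x s0 p : bnorm (S' u0) <= s0 -> (forall x, kabs (ph' (S x)) <= p * bnorm x) ->
  bnorm (bsub (S' x) (S x)) <= (funnorm ph * s0 + p * bnorm u1 + g' * h * g + kabs Dl * g' * g) * bnorm x.
Proof. intros Hs Hp0.
  eapply Rle_trans. apply (four_tri _ _ _ _ _ _ (gam_master_id x)).
  rewrite !ax_norm_scal.
  pose proof (fph x) as Q1. pose proof (norm_ge0 (S' u0)) as Q2. pose proof (Hp0 x) as Q3.
  pose proof (gS' (Hp (S x))) as Q4. pose proof (hH (S x)) as Q5. pose proof (gS x) as Q6.
  pose proof (gS' (S x)) as Q7. pose proof g0 as Q8. pose proof g0' as Q9. pose proof h0 as Q10.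
  pose proof (norm_ge0 x) as Q11. pose proof (kabs_ge0 Dl) as Q12. pose proof (kabs_ge0 (ph x)) as Q13.
  pose proof fph0 as Q14. pose proof (norm_ge0 u1) as Q15. pose proof (kabs_ge0 (ph' (S x))) as Q16.
  assert (A1 : kabs (ph x) * bnorm (S' u0) <= funnorm ph * s0 * bnorm x) by nra.
  assert (A2 : kabs (ph' (S x)) * bnorm u1 <= p * bnorm u1 * bnorm x) by nra.
  assert (A3 : bnorm (S' (Hp (S x))) <= g' * h * g * bnorm x).
  { eapply Rle_trans. apply Q4. rewrite !Rmult_assoc. apply Rmult_le_compat_l; auto.
    eapply Rle_trans. apply Q5. apply Rmult_le_compat_l; auto. }
  assert (A4 : kabs Dl * bnorm (S' (S x)) <= kabs Dl * g' * g * bnorm x).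
  { rewrite !Rmult_assoc. apply Rmult_le_compat_l; auto. eapply Rle_trans. apply Q7.
    apply Rmult_le_compat_l; auto. }
  lra. Qed.

Lemma S'u0_crude : bnorm (S' u0) <= g' * bnorm (bsub u1 u0).
Proof. replace (S' u0) with (bopp (S' (bsub u1 u0))).
  rewrite norm_opp; apply gS'.
  rewrite (S_sub _ _ _ _ E'), (S_u _ _ _ _ E'). unfold bsub. rewrite add0l, opp_opp; auto. Qed.

Lemma NL'u0 : Nop lam L' u0 = bsub (Hp u0) (bscal Dl u0).
Proof. unfold Nop. rewrite Hx, Lu0, scal_sub_l, sub_sub_r. reflexivity. Qed.

Lemma S'u0_fine : bnorm (S' u0) <= g' * g' * h * bnorm u0 + kabs Dl * g' * (g' * bnorm (bsub u1 u0)).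
Proof.
  assert (Hid : S' u0 = bsub (S' (S' (Hp u0))) (bscal Dl (S' (S' u0)))).
  { transitivity (S' (pi_of u phi L' u0)).
    { rewrite (pi_eq _ _ _ _ E'), (S_sub _ _ _ _ E'), (S_scal _ _ _ _ E'), (S_u _ _ _ _ E'), scal0r, sub0r. auto. }
    rewrite <- (S_N _ _ _ _ E'), NL'u0, (S_sub _ _ _ _ E'), (S_scal _ _ _ _ E'), (S_sub _ _ _ _ E'), (S_scal _ _ _ _ E').
    reflexivity. }
  rewrite Hid at 1. eapply Rle_trans. apply norm_scal_sub_le. rewrite ax_norm_scal.
  pose proof (gS' (S' (Hp u0))) as Q1. pose proof (gS' (Hp u0)) as Q2. pose proof (hH u0) as Q3.
  pose proof (gS' (S' u0)) as Q4. pose proof S'u0_crude as Q5. pose proof g0' as Q6. pose proof h0 as Q7.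
  pose proof (kabs_ge0 Dl) as Q8. pose proof (norm_ge0 (S' u0)) as Q9.
  assert (A1 : bnorm (S' (S' (Hp u0))) <= g' * g' * h * bnorm u0).
  { eapply Rle_trans. apply Q1. rewrite !Rmult_assoc. apply Rmult_le_compat_l; auto.
    eapply Rle_trans. apply Q2. apply Rmult_le_compat_l; auto. }
  assert (A2 : kabs Dl * bnorm (S' (S' u0)) <= kabs Dl * g' * (g' * bnorm (bsub u1 u0))).
  { rewrite Rmult_assoc. apply Rmult_le_compat_l; auto. eapply Rle_trans. apply Q4.
    apply Rmult_le_compat_l; auto. }
  lra. Qed.

Lemma ph'S_crude x : kabs (ph' (S x)) <= funnorm ph' * g * bnorm x.
Proof. eapply Rle_trans. apply fph'. rewrite Rmult_assoc. apply Rmult_le_compat_l. apply fph0'. apply gS. Qed.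

Lemma ph'S_fine x : kabs (ph' (S x)) <= (funnorm ph' * h * g * g + kabs Dl * dph * g * g) * bnorm x.
Proof.
  set (z := S (S x)).
  assert (Nz : Nop lam L z = S x).
  { unfold z. rewrite (N_S _ _ _ _ E), (pi_eq _ _ _ _ E), (phi_S _ _ _ _ E), scal0l, sub0r. auto. }
  assert (Hid : ph' (S x) = kadd (kopp (ph' (Hp z))) (kmul Dl (ph' z))).
  { rewrite <- Nz. unfold Nop. rewrite Hx, !(phi_sub _ _ _ _ E'), (phi_scal _ _ _ _ E'), phl'. ring. }
  assert (Hz : kabs (ph' z) <= dph * (g * (g * bnorm x))).
  { replace (ph' z) with (kopp (kadd (ph z) (kopp (ph' z)))).
    rewrite kabs_opp. eapply Rle_trans. apply fdph. apply Rmult_le_compat_l. apply dph0.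
    eapply Rle_trans. apply gS. apply Rmult_le_compat_l. apply g0. apply gS.
    unfold z. rewrite (phi_S _ _ _ _ E). ring. }
  assert (Hz2 : bnorm z <= g * (g * bnorm x)).
  { eapply Rle_trans. apply gS. apply Rmult_le_compat_l. apply g0. apply gS. }
  rewrite Hid. eapply Rle_trans. apply kabs_tri. rewrite kabs_opp, kabs_mul.
  pose proof (fph' (Hp z)) as Q1. pose proof (hH z) as Q2. pose proof fph0' as Q3. pose proof h0 as Q4.
  pose proof (kabs_ge0 Dl) as Q5.
  assert (A1 : kabs (ph' (Hp z)) <= funnorm ph' * h * g * g * bnorm x).
  { eapply Rle_trans. apply Q1. rewrite !Rmult_assoc. apply Rmult_le_compat_l; auto.
    eapply Rle_trans. apply Q2. apply Rmult_le_compat_l; auto. }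
  assert (A2 : kabs Dl * kabs (ph' z) <= kabs Dl * dph * g * g * bnorm x).
  { replace (kabs Dl * dph * g * g * bnorm x) with (kabs Dl * (dph * (g * (g * bnorm x)))) by ring.
    apply Rmult_le_compat_l; auto. }
  lra. Qed.

Definition Eg := funnorm ph * (g' * g' * h * bnorm u0 + kabs Dl * g' * (g' * bnorm (bsub u1 u0))) +
  (funnorm ph' * h * g * g + kabs Dl * dph * g * g) * bnorm u1 + g' * h * g + kabs Dl * g' * g.
Definition Ec := funnorm ph * (g' * bnorm (bsub u1 u0)) + funnorm ph' * g * bnorm u1 + g' * h * g + kabs Dl * g' * g.

Lemma gam_fine x : bnorm (bsub (S' x) (S x)) <= Eg * bnorm x.
Proof. apply gam_master. apply S'u0_fine. apply ph'S_fine. Qed.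
Lemma gam_crude x : bnorm (bsub (S' x) (S x)) <= Ec * bnorm x.
Proof. apply gam_master. apply S'u0_crude. apply ph'S_crude. Qed.
End Two.
Section Lim.
Context {k : Kind} {X : Banach k}.
Variables (V : (X -> X) -> Prop) (L : X -> X).
Hypothesis HVB : forall L', V L' -> BLop L'.
Hypothesis HLB : BLop L.

Definition ev (P : (X -> X) -> Prop) : Prop :=
  exists r, 0 < r /\ forall L', V L' -> opnorm (op_sub L' L) < r -> P L'.
Definition tends (f : (X -> X) -> R) (a : R) : Prop :=
  forall eps, 0 < eps -> ev (fun L' => Rabs (f L' - a) < eps).

Lemma ev_and P Q : ev P -> ev Q -> ev (fun L' => P L' /\ Q L').
Proof. intros [r1 [h1 H1]] [r2 [h2 H2]]. exists (Rmin r1 r2). split. apply Rmin_pos; auto.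
  intros L' VL' hl. pose proof (Rmin_l r1 r2). pose proof (Rmin_r r1 r2). split; [apply H1|apply H2]; auto; lra. Qed.
Lemma ev_imp (P Q : (X -> X) -> Prop) : ev P -> (forall L', V L' -> P L' -> Q L') -> ev Q.
Proof. intros [r [hr H1]] HPQ. exists r; split; auto. Qed.
Lemma ev_h_ge0 : ev (fun L' => 0 <= opnorm (op_sub L' L)).
Proof. exists 1; split. lra. intros L' VL' _. apply op_ge0, BLop_bnd, BLop_sub; auto. Qed.

Lemma tends_const a : tends (fun _ => a) a.
Proof. intros e he. exists 1; split. lra. intros. rewrite Rminus_diag, Rabs_R0; auto. Qed.
Lemma tends_h : tends (fun L' => opnorm (op_sub L' L)) 0.
Proof. intros e he. exists e; split; auto. intros L' VL' hl.
  pose proof (op_ge0 _ (BLop_bnd _ (BLop_sub _ _ (HVB L' VL') HLB))). rewrite Rminus_0_r, Rabs_right; lra. Qed.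
Lemma tends_bound f a g : ev (fun L' => Rabs (f L' - a) <= g L') -> tends g 0 -> tends f a.
Proof. intros He Hg e he. apply (ev_imp _ _ (ev_and _ _ He (Hg e he))).
  intros L' _ [A B]. rewrite Rminus_0_r in B. pose proof (Rle_abs (g L')). lra. Qed.
Lemma tends_lt f a b : tends f a -> a < b -> ev (fun L' => f L' < b).
Proof. intros Hf hab. apply (ev_imp _ _ (Hf (b - a) ltac:(lra))). intros L' _ A.
  pose proof (Rle_abs (f L' - a)). lra. Qed.
Lemma tends_gt f a b : tends f a -> b < a -> ev (fun L' => b < f L').
Proof. intros Hf hab. apply (ev_imp _ _ (Hf (a - b) ltac:(lra))). intros L' _ A.
  pose proof (Rle_abs (-(f L' - a))). rewrite Rabs_Ropp in H. lra. Qed.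
Lemma tends_plus f g a b : tends f a -> tends g b -> tends (fun L' => f L' + g L') (a + b).
Proof. intros Hf Hg e he. apply (ev_imp _ _ (ev_and _ _ (Hf (e/2) ltac:(lra)) (Hg (e/2) ltac:(lra)))).
  intros L' _ [A B]. replace (f L' + g L' - (a + b)) with ((f L' - a) + (g L' - b)) by ring.
  pose proof (Rabs_triang (f L' - a) (g L' - b)). lra. Qed.
Lemma tends_mult f g a b : tends f a -> tends g b -> tends (fun L' => f L' * g L') (a * b).
Proof. intros Hf Hg e he.
  set (e1 := e / (2 * (Rabs b + 1))). set (e2 := Rmin 1 (e / (2 * (Rabs a + 1)))).
  assert (pa : 0 <= Rabs a) by apply Rabs_pos. assert (pb : 0 <= Rabs b) by apply Rabs_pos.
  assert (he1 : 0 < e1) by (unfold e1; apply Rdiv_lt_0_compat; lra).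
  assert (he2 : 0 < e2) by (unfold e2; apply Rmin_pos; [lra|apply Rdiv_lt_0_compat; lra]).
  apply (ev_imp _ _ (ev_and _ _ (Hf e1 he1) (Hg e2 he2))).
  intros L' _ [A B]. unfold e2 in B.
  replace (f L' * g L' - a * b) with ((f L' - a) * g L' + a * (g L' - b)) by ring.
  eapply Rle_lt_trans. apply Rabs_triang. rewrite !Rabs_mult.
  assert (Gb : Rabs (g L') <= Rabs b + 1).
  { pose proof (Rmin_l 1 (e / (2 * (Rabs a + 1)))). pose proof (Rabs_triang_inv (g L') b). lra. }
  assert (C1 : Rabs (f L' - a) * Rabs (g L') <= e1 * (Rabs b + 1)).
  { apply Rmult_le_compat; auto using Rabs_pos; lra. }
  assert (C2 : Rabs a * Rabs (g L' - b) <= Rabs a * (e / (2 * (Rabs a + 1)))).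
  { apply Rmult_le_compat_l; auto. pose proof (Rmin_r 1 (e / (2 * (Rabs a + 1)))). lra. }
  assert (E1 : e1 * (Rabs b + 1) = e / 2) by (unfold e1; field; lra).
  assert (E2 : Rabs a * (e / (2 * (Rabs a + 1))) < e / 2).
  { apply (Rmult_lt_reg_r (2 * (Rabs a + 1))). lra.
    replace (Rabs a * (e / (2 * (Rabs a + 1))) * (2 * (Rabs a + 1))) with (Rabs a * e) by (field; lra). nra. }
  lra. Qed.
Lemma tends_ext f g a : ev (fun L' => f L' = g L') -> tends g a -> tends f a.
Proof. intros He Hg e he. apply (ev_imp _ _ (ev_and _ _ He (Hg e he))). intros L' _ [A B]; rewrite A; auto. Qed.

Lemma opnorm_subC L' : BLop L' -> opnorm (op_sub L L') = opnorm (op_sub L' L).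
Proof. intro BL'. pose proof (BLop_bnd _ (BLop_sub _ _ BL' HLB)) as B1. pose proof (BLop_bnd _ (BLop_sub _ _ HLB BL')) as B2.
  apply Rle_antisym; apply op_lub; auto; try apply op_ge0; auto; intro x; unfold op_sub; rewrite norm_subC.
  apply (op_le (op_sub L' L)); auto. apply (op_le (op_sub L L')); auto. Qed.

Lemma md_from (f : (X -> X) -> R) c E : 0 <= c -> tends E c ->
  ev (fun L' => Rabs (f L - f L') <= opnorm (op_sub L' L) * E L') -> metric_deriv_le V f L c.
Proof. intros hc HE Hb eps heps.
  destruct (ev_and _ _ Hb (tends_lt _ _ (c + eps) HE ltac:(lra))) as [r [hr Hr]].
  exists r; split; auto. intros L' VL' neq hl. destruct (Hr L' VL' hl) as [A B].
  rewrite opnorm_subC by auto.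
  pose proof (op_ge0 _ (BLop_bnd _ (BLop_sub _ _ (HVB L' VL') HLB))) as h0.
  destruct (Req_dec (opnorm (op_sub L' L)) 0) as [Z|NZ].
  - rewrite Z, Rdiv_0_r. lra.
  - unfold Rdiv. apply Rle_trans with (E L'). 2: lra.
    apply (Rmult_le_reg_r (opnorm (op_sub L' L))). lra.
    rewrite Rmult_assoc, Rinv_l, Rmult_1_r by auto. lra. Qed.
End Lim.
Section Main.
Context {k : Kind} {X : Banach k}.
Variables (lam : (X -> X) -> sc k) (u : (X -> X) -> X) (phi : (X -> X) -> X -> sc k).
Variables (V : (X -> X) -> Prop) (L : X -> X).
Hypothesis HVE : forall L', V L' -> EigData lam u phi L'.
Hypothesis VL : V L.
Hypothesis Hau : analytic_at raw_X V u L.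
Hypothesis Hap : analytic_at raw_dual V phi L.

Lemma HVB : forall L', V L' -> BLop L'. Proof. intros; apply HVE; auto. Qed.
Lemma HLB : BLop L. Proof. apply HVB; auto. Qed.
Lemma EL : EigData lam u phi L. Proof. auto. Qed.
Notation EV := (ev V L).
Notation TE := (tends V L).

Lemma t_plus f g a b : TE f a -> TE g b -> TE (fun L' => f L' + g L') (a + b).
Proof. exact (tends_plus V L HVB HLB f g a b). Qed.
Lemma t_mult f g a b : TE f a -> TE g b -> TE (fun L' => f L' * g L') (a * b).
Proof. exact (tends_mult V L HVB HLB f g a b). Qed.
Lemma t_const a : TE (fun _ => a) a.
Proof. exact (tends_const V L HVB HLB a). Qed.
Lemma t_val f a b : TE f a -> a = b -> TE f b.
Proof. intros; subst; auto. Qed.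
Lemma e_and P Q : EV P -> EV Q -> EV (fun L' => P L' /\ Q L').
Proof. exact (ev_and V L HVB HLB P Q). Qed.
Lemma e_imp (P Q : (X -> X) -> Prop) : EV P -> (forall L', V L' -> P L' -> Q L') -> EV Q.
Proof. exact (ev_imp V L HVB HLB P Q). Qed.
Lemma t_bound f a g : EV (fun L' => Rabs (f L' - a) <= g L') -> TE g 0 -> TE f a.
Proof. exact (tends_bound V L HVB HLB f a g). Qed.
Lemma t_lt f a b : TE f a -> a < b -> EV (fun L' => f L' < b).
Proof. exact (tends_lt V L HVB HLB f a b). Qed.

Ltac pos := repeat (first [assumption | apply Rplus_le_le_0_compat | apply Rmult_le_pos]).
Ltac tend := repeat (first [eassumption | apply t_const | apply t_plus | apply t_mult]).

Definition hq L' := opnorm (op_sub L' L).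
Definition duq L' := bnorm (bsub (u L') (u L)).
Definition nuq L' := bnorm (u L').
Definition nphq L' := funnorm (phi L').
Definition dphq L' := funnorm (fsub (phi L) (phi L')).
Definition gq L' := opnorm (Sop lam u phi L').
Definition aDq L' := kabs (kadd (lam L') (kopp (lam L))).
Definition phn := funnorm (phi L).
Definition u0n := bnorm (u L).
Definition gL := opnorm (Sop lam u phi L).
Definition tau := phn * u0n.
Definition Dq L' := phn * nuq L' * (1 + 2 * phn * duq L').

Lemma t_h : TE hq 0.
Proof. exact (tends_h V L HVB HLB). Qed.

Lemma op_add_sub L' : op_add L (op_sub L' L) = L'.
Proof. apply functional_extensionality; intro x. unfold op_add, op_sub. apply add_sub_r. Qed.

Lemma ev_V : EV (fun L' => True). Proof. exists 1; split; auto; lra. Qed.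

Lemma t_Ch C : TE (fun L' => C * hq L') 0.
Proof. apply (t_val _ (C * 0)). tend. apply t_h. ring. Qed.

Lemma t_du : TE duq 0.
Proof. destruct (analytic_lip_X V u L Hau) as [r [C [hr [hC Hb]]]].
  apply (t_bound _ _ (fun L' => C * hq L')); [|apply t_Ch].
  exists r; split; auto. intros L' VL' hl.
  specialize (Hb (op_sub L' L) (BLop_sub _ _ (HVB L' VL') HLB) hl). rewrite op_add_sub in Hb.
  unfold duq, hq. rewrite Rminus_0_r, Rabs_right; auto. apply Rle_ge, norm_ge0. Qed.

Lemma Hphif : forall L', V L' -> BLfun (phi L'). Proof. intros; apply HVE; auto. Qed.

Lemma t_dph : TE dphq 0.
Proof. destruct (analytic_lip_dual V phi L Hap Hphif) as [r [C [hr [hC Hb]]]].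
  apply (t_bound _ _ (fun L' => C * hq L')); [|apply t_Ch].
  exists r; split; auto. intros L' VL' hl.
  specialize (Hb (op_sub L' L) (BLop_sub _ _ (HVB L' VL') HLB) hl). rewrite op_add_sub in Hb.
  unfold dphq, hq. rewrite fsub_sym by (apply Hphif; auto).
  rewrite Rminus_0_r, Rabs_right; auto. apply Rle_ge, fn_ge0, BLfun_bnd, BLfun_sub; apply Hphif; auto. Qed.

Lemma t_nu : TE nuq u0n.
Proof. apply (t_bound _ _ duq); [|apply t_du]. apply (e_imp _ _ ev_V). intros L' _ _.
  unfold nuq, u0n, duq. pose proof (norm_sub_ge (u L') (u L)). pose proof (norm_sub_ge (u L) (u L')).
  rewrite norm_subC in H0. apply Rabs_le. lra. Qed.

Lemma t_nph : TE nphq phn.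
Proof. apply (t_bound _ _ dphq); [|apply t_dph]. apply (e_imp _ _ ev_V). intros L' VL' _.
  unfold nphq, phn, dphq.
  pose proof (Hphif L' VL') as B1. pose proof (Hphif L VL) as B0.
  pose proof (BLfun_bnd _ (BLfun_sub _ _ B0 B1)) as Bd.
  pose proof (fn_ge0 _ Bd) as Bd0.
  assert (A1 : funnorm (phi L') <= funnorm (phi L) + funnorm (fsub (phi L) (phi L'))).
  { apply fn_lub. apply BLfun_bnd; auto. pose proof (fn_ge0 _ (BLfun_bnd _ B0)). lra.
    intro x. pose proof (kabs_sub (phi L' x) (phi L x)). rewrite kabs_subC in H.
    pose proof (fn_le _ x Bd). change (fsub (phi L) (phi L') x) with (kadd (phi L x) (kopp (phi L' x))) in H0. pose proof (fn_le _ x (BLfun_bnd _ B0)). rewrite Rmult_plus_distr_r; lra. }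
  assert (A2 : funnorm (phi L) <= funnorm (phi L') + funnorm (fsub (phi L) (phi L'))).
  { apply fn_lub. apply BLfun_bnd; auto. pose proof (fn_ge0 _ (BLfun_bnd _ B1)). lra.
    intro x. pose proof (kabs_sub (phi L x) (phi L' x)).
    pose proof (fn_le _ x Bd). change (fsub (phi L) (phi L') x) with (kadd (phi L x) (kopp (phi L' x))) in H0. pose proof (fn_le _ x (BLfun_bnd _ B1)). rewrite Rmult_plus_distr_r; lra. }
  apply Rabs_le. lra. Qed.

Lemma phn0 : 0 <= phn. Proof. apply fn_ge0, BLfun_bnd, Hphif; auto. Qed.
Lemma u0n0 : 0 <= u0n. Proof. apply norm_ge0. Qed.
Lemma gL0 : 0 <= gL. Proof. apply op_ge0, (S_bnd _ _ _ _ EL). Qed.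

Lemma t_Dq : TE Dq tau.
Proof. unfold Dq. apply (t_val _ (phn * u0n * (1 + 2 * phn * 0))). pose proof t_nu. pose proof t_du. tend.
  unfold tau; ring. Qed.

Lemma e_Dl : EV (fun L' => aDq L' <= hq L' * Dq L').
Proof.
  assert (T : TE (fun L' => phn * duq L') 0).
  { apply (t_val _ (phn * 0)). tend. apply t_du. ring. }
  apply (e_imp _ _ (t_lt _ _ (1/2) T ltac:(lra))). intros L' VL' A.
  pose proof (Dl_bound _ _ _ _ _ EL (HVE L' VL')) as B. fold phn in B.
  unfold aDq, hq, Dq, nuq, duq in *.
  pose proof (kabs_ge0 (kadd (lam L') (kopp (lam L)))). pose proof phn0.
  pose proof (op_ge0 _ (BLop_bnd _ (BLop_sub _ _ (HVB L' VL') HLB))).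
  pose proof (norm_ge0 (u L')). pose proof (norm_ge0 (bsub (u L') (u L))).
  set (a := kabs (kadd (lam L') (kopp (lam L)))) in *.
  set (hh := opnorm (op_sub L' L)) in *.
  set (n1 := bnorm (u L')) in *. set (dd := bnorm (bsub (u L') (u L))) in *.
  assert (a <= 2 * (phn * hh * n1)) by nra.
  assert (a * (phn * dd) <= 2 * (phn * hh * n1) * (phn * dd)) by (apply Rmult_le_compat_r; nra).
  nra. Qed.

Lemma t_aD : TE aDq 0.
Proof. apply (t_bound _ _ (fun L' => hq L' * Dq L')).
  apply (e_imp _ _ e_Dl). intros L' _ A. unfold aDq in *. rewrite Rminus_0_r, Rabs_right; auto. apply Rle_ge, kabs_ge0.
  apply (t_val _ (0 * tau)). pose proof t_h. pose proof t_Dq. tend. ring. Qed.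
Lemma u_pos L' : V L' -> 0 < bnorm (u L').
Proof. intro VL'. destruct (Req_dec (bnorm (u L')) 0) as [Z|NZ].
  - exfalso. apply norm_eq0 in Z. destruct (HVE L' VL') as [_ [_ [_ [_ [_ Ho]]]]].
    rewrite Z, (phi_0 _ _ _ _ (HVE L' VL')) in Ho. apply (@kone_neq k). auto.
  - pose proof (norm_ge0 (u L')). lra. Qed.

Lemma nonneg_facts L' : V L' ->
  0 <= hq L' /\ 0 <= duq L' /\ 0 <= nuq L' /\ 0 <= nphq L' /\ 0 <= dphq L' /\ 0 <= gq L' /\ 0 <= aDq L'.
Proof. intro VL'. unfold hq, duq, nuq, nphq, dphq, gq, aDq.
  repeat split; try apply norm_ge0.
  apply op_ge0, BLop_bnd, BLop_sub; auto using HVB, HLB.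
  apply fn_ge0, BLfun_bnd, Hphif; auto.
  apply fn_ge0, BLfun_bnd, BLfun_sub; apply Hphif; auto.
  apply op_ge0, (S_bnd _ _ _ _ (HVE L' VL')).
  apply kabs_ge0. Qed.

Definition Bg := 2 * gL * (tau + 2).

Lemma e_gbnd : EV (fun L' => gq L' <= Bg).
Proof.
  assert (TQ : TE (fun L' => phn * duq L' + hq L' * gL + aDq L' * gL) 0).
  { apply (t_val _ (phn * 0 + 0 * gL + 0 * gL)). pose proof t_du. pose proof t_h. pose proof t_aD. tend. ring. }
  assert (TN : TE (fun L' => nphq L' * nuq L') tau).
  { apply (t_val _ (phn * u0n)). pose proof t_nph. pose proof t_nu. tend. auto. }
  apply (e_imp _ _ (e_and _ _ (t_lt _ _ (1/2) TQ ltac:(lra)) (t_lt _ _ (tau + 1) TN ltac:(lra)))).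
  intros L' VL' [A B].
  pose proof (nonneg_facts L' VL') as [n1 [n2 [n3 [n4 [n5 [n6 n7]]]]]].
  pose proof phn0. pose proof gL0. pose proof u0n0.
  assert (C : gq L' <= gL + Ec lam u phi L L').
  { apply op_diff. apply (S_bnd _ _ _ _ (HVE L' VL')). apply (S_bnd _ _ _ _ EL).
    unfold Ec. fold phn gL. fold (gq L') (hq L') (aDq L') (nuq L') (duq L'). fold (nphq L').
    apply Rplus_le_le_0_compat. apply Rplus_le_le_0_compat. apply Rplus_le_le_0_compat.
    all: repeat apply Rmult_le_pos; auto.
    apply (gam_crude _ _ _ _ _ EL (HVE L' VL')). }
  unfold Ec in C. fold phn gL in C. fold (gq L') (hq L') (aDq L') (nuq L') (duq L') (nphq L') in C.
  unfold Bg.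
  set (q := phn * duq L' + hq L' * gL + aDq L' * gL) in *.
  assert (C2 : gq L' * (1 - q) <= gL * (1 + nphq L' * nuq L')).
  { unfold q. nra. }
  assert (C3 : gL * (1 + nphq L' * nuq L') <= gL * (tau + 2)) by (apply Rmult_le_compat_l; lra).
  nra. Qed.
Definition c2 L' := phn * u0n + phn * Dq L' * duq L'.
Definition c1 L' := gL + Dq L' * gL.
Definition c0 L' := (nphq L' * gL * gL + Dq L' * dphq L' * gL * gL) * nuq L'.
Definition Egq L' := c2 L' * (gq L' * gq L') + c1 L' * gq L' + c0 L'.
Definition EgB L' := c2 L' * (Bg * Bg) + c1 L' * Bg + c0 L'.

Lemma Eg_split L' : Eg lam u phi L L' = hq L' * Egq L' + (aDq L' - hq L' * Dq L') *
   (phn * (gq L' * (gq L' * duq L')) + dphq L' * gL * gL * nuq L' + gq L' * gL).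
Proof. unfold Eg, Egq, c2, c1, c0, hq, aDq, Dq, duq, nuq, dphq, gq, phn, u0n, gL, nphq. ring. Qed.

Lemma e_gdiff : EV (fun L' => Rabs (gq L' - gL) <= hq L' * Egq L').
Proof. apply (e_imp _ _ e_Dl). intros L' VL' A.
  pose proof (nonneg_facts L' VL') as [n1 [n2 [n3 [n4 [n5 [n6 n7]]]]]].
  pose proof phn0. pose proof gL0. pose proof u0n0.
  assert (W0 : 0 <= phn * (gq L' * (gq L' * duq L')) + dphq L' * gL * gL * nuq L' + gq L' * gL).
  { pos. }
  assert (Hle : Eg lam u phi L L' <= hq L' * Egq L').
  { rewrite Eg_split. assert ((aDq L' - hq L' * Dq L') * (phn * (gq L' * (gq L' * duq L')) + dphq L' * gL * gL * nuq L' + gq L' * gL) <= 0).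
    { apply Rmult_le_0_r; lra. } lra. }
  assert (E0 : 0 <= Eg lam u phi L L').
  { unfold Eg. fold phn gL u0n. fold (gq L') (hq L') (aDq L') (nuq L') (duq L') (nphq L') (dphq L').
    pos. }
  pose proof (op_diff _ _ _ (S_bnd _ _ _ _ (HVE L' VL')) (S_bnd _ _ _ _ EL) E0 (gam_fine _ _ _ _ _ EL (HVE L' VL'))) as D1.
  assert (D2 : gL <= gq L' + Eg lam u phi L L').
  { apply op_diff; auto. apply (S_bnd _ _ _ _ EL). apply (S_bnd _ _ _ _ (HVE L' VL')).
    intro x. rewrite norm_subC. apply (gam_fine _ _ _ _ _ EL (HVE L' VL')). }
  fold (gq L') gL in D1, D2. apply Rabs_le. lra. Qed.

Lemma t_g : TE gq gL.
Proof.
  set (K0 := (phn * u0n + phn * tau * 0) * (Bg * Bg) + (gL + tau * gL) * Bg + (phn * gL * gL + tau * 0 * gL * gL) * u0n).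
  assert (TB : TE EgB K0).
  { unfold EgB, c2, c1, c0. pose proof t_Dq. pose proof t_du. pose proof t_nph. pose proof t_dph. pose proof t_nu.
    unfold K0. tend. }
  apply (t_bound _ _ (fun L' => (K0 + 1) * hq L')); [|apply t_Ch].
  apply (e_imp _ _ (e_and _ _ (e_and _ _ e_gdiff e_gbnd) (t_lt _ _ (K0 + 1) TB ltac:(lra)))).
  intros L' VL' [[A B] C].
  pose proof (nonneg_facts L' VL') as [n1 [n2 [n3 [n4 [n5 [n6 n7]]]]]].
  pose proof phn0. pose proof gL0. pose proof u0n0.
  assert (Dq0 : 0 <= Dq L') by (unfold Dq; apply Rmult_le_pos; [pos | nra]).
  assert (c20 : 0 <= c2 L') by (unfold c2; pos).
  assert (c10 : 0 <= c1 L') by (unfold c1; pos).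
  assert (M : Egq L' <= EgB L').
  { unfold Egq, EgB.
    assert (gq L' * gq L' <= Bg * Bg) by nra.
    assert (c2 L' * (gq L' * gq L') <= c2 L' * (Bg * Bg)) by (apply Rmult_le_compat_l; auto).
    assert (c1 L' * gq L' <= c1 L' * Bg) by (apply Rmult_le_compat_l; auto).
    lra. }
  assert (hq L' * Egq L' <= hq L' * (K0 + 1)) by (apply Rmult_le_compat_l; lra).
  lra. Qed.

Definition Etq L' := nphq L' * (Dq L' * gL * duq L' + gL * nuq L') + u0n * (phn * gq L' + Dq L' * dphq L' * gq L').

Lemma Etau_split L' : Etau lam u phi L L' = hq L' * Etq L' + (aDq L' - hq L' * Dq L') *
   (nphq L' * gL * duq L' + u0n * dphq L' * gq L').
Proof. unfold Etau, Etq, hq, aDq, Dq, duq, nuq, dphq, gq, phn, u0n, gL, nphq. ring. Qed.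

Lemma e_tau : EV (fun L' => Rabs (tau_of u phi L - tau_of u phi L') <= hq L' * Etq L').
Proof. apply (e_imp _ _ e_Dl). intros L' VL' A.
  pose proof (nonneg_facts L' VL') as [n1 [n2 [n3 [n4 [n5 [n6 n7]]]]]].
  pose proof phn0. pose proof gL0. pose proof u0n0.
  assert (Hle : Etau lam u phi L L' <= hq L' * Etq L').
  { rewrite Etau_split. assert ((aDq L' - hq L' * Dq L') * (nphq L' * gL * duq L' + u0n * dphq L' * gq L') <= 0).
    { apply Rmult_le_0_r. lra. pos. } lra. }
  assert (E0 : 0 <= Etau lam u phi L L').
  { unfold Etau. fold phn gL u0n. fold (gq L') (hq L') (aDq L') (nuq L') (duq L') (nphq L') (dphq L').
    pos. }
  pose proof (fn_diff _ _ _ _ _ (BLfun_bnd _ (Hphif L' VL')) (BLfun_bnd _ (Hphif L VL)) (u_pos L' VL') E0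
     (tau_pt _ _ _ _ _ EL (HVE L' VL'))) as D1.
  assert (D2 : funnorm (phi L) * bnorm (u L) <= funnorm (phi L') * bnorm (u L') + Etau lam u phi L L').
  { apply fn_diff; auto. apply BLfun_bnd, Hphif; auto. apply BLfun_bnd, Hphif; auto. apply u_pos; auto.
    intro x. rewrite norm_subC. apply (tau_pt _ _ _ _ _ EL (HVE L' VL')). }
  unfold tau_of. apply Rabs_le. lra. Qed.

Lemma main_tau : metric_deriv_le V (tau_of u phi) L (2 * gamma_of lam u phi L * tau_of u phi L).
Proof.
  apply (md_from V L HVB HLB _ _ Etq).
  - pose proof gL0. pose proof phn0. pose proof u0n0. unfold gamma_of, tau_of.
    change (opnorm (S_of lam u phi L)) with gL. fold phn u0n. repeat apply Rmult_le_pos; lra.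
  - eapply t_val. unfold Etq. pose proof t_Dq. pose proof t_du. pose proof t_nph. pose proof t_dph. pose proof t_nu.
    pose proof t_g. tend.
    unfold gamma_of, tau_of, tau. change (opnorm (S_of lam u phi L)) with gL. fold phn u0n. ring.
  - exact e_tau.
Qed.

Lemma main_gam : metric_deriv_le V (gamma_of lam u phi) L
      (gamma_of lam u phi L ^ 2 * (1 + 3 * tau_of u phi L)).
Proof.
  apply (md_from V L HVB HLB _ _ Egq).
  - pose proof gL0. pose proof phn0. pose proof u0n0. unfold gamma_of, tau_of.
    change (opnorm (S_of lam u phi L)) with gL. fold phn u0n.
    apply Rmult_le_pos. apply pow_le; auto. pose proof (Rmult_le_pos _ _ H0 H1). lra.
  - eapply t_val. unfold Egq, c2, c1, c0. pose proof t_Dq. pose proof t_du. pose proof t_nph. pose proof t_dph. pose proof t_nu.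
    pose proof t_g. tend.
    unfold gamma_of, tau_of, tau. change (opnorm (S_of lam u phi L)) with gL. fold phn u0n. ring.
  - apply (e_imp _ _ e_gdiff). intros L' _ A. unfold gamma_of.
    change (opnorm (S_of lam u phi L')) with (gq L'). change (opnorm (S_of lam u phi L)) with gL.
    rewrite Rabs_minus_sym. exact A.
Qed.
End Main.

Theorem corollary5p2 (k : Kind) (X : Banach k)
  (L0 : X -> X) (lam0 : sc k) (V : (X -> X) -> Prop)
  (lam : (X -> X) -> sc k) (u : (X -> X) -> X) (phi : (X -> X) -> X -> sc k) :
  BLop L0 ->
  simple_isolated_eigenvalue L0 lam0 ->
  is_open_op V -> V L0 ->
  analytic_on raw_K V lam ->
  analytic_on raw_X V u ->
  analytic_on raw_dual V phi ->
  lam L0 = lam0 ->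
  (forall L, V L ->
     simple_isolated_eigenvalue L (lam L) /\
     u L <> bzero X /\ L (u L) = bscal (lam L) (u L) /\
     BLfun (phi L) /\ (forall x, phi L (L x) = kmul (lam L) (phi L x)) /\
     phi L (u L) = kone) ->
  forall L, V L ->
    metric_deriv_le V (tau_of u phi) L
      (2 * gamma_of lam u phi L * tau_of u phi L) /\
    metric_deriv_le V (gamma_of lam u phi) L
      (gamma_of lam u phi L ^ 2 * (1 + 3 * tau_of u phi L)).
Proof.
  intros _ _ Hop _ _ Hu Hphi _ HV L VL.
  assert (HE : forall L', V L' -> EigData lam u phi L').
  { intros L' VL'. destruct (HV L' VL') as [A [_ [B [C [D E]]]]].
    exact (conj (proj1 (Hop L' VL')) (conj A (conj B (conj C (conj D E))))). }
  split.
  - apply (main_tau lam u phi V L HE VL (Hu L VL) (Hphi L VL)).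
  - apply (main_gam lam u phi V L HE VL (Hu L VL) (Hphi L VL)).
Qed.
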